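(* Let $Q$ be an admissible orientation of $\tilde A_n$ and $I,J$ indecomposable linearized semigroup ideals of $\Bbbk Q$ of type II such that $\Gamma_I\cup\Gamma_J=\Gamma$. Then $IJ$ decomposes into a direct sum of two non-zero ideals if and only if every isolated vertex $\omega$ of $\Gamma_I\cap\Gamma_J$ can be written as $\omega=\alpha\beta$ for some paths $\alpha\in I$ and $\beta\in J$.
   Context: $\Bbbk$ is an algebraically closed field. An admissible orientation of $\tilde A_n$ is a finite quiver $Q$ with $n$ vertices whose underlying undirected graph is a cycle, having no oriented cycle and at least one source; $k$ is the number of sources (= number of sinks). Paths include trivial paths $\varepsilon_x$; the product $\alpha\beta$ is the concatenation (first $\beta$, then $\alpha$) when defined and $0$ otherwise. Maximal paths are paths not properly contained as subpaths of other paths. A linearized semigroup ideal is an ideal spanned by a set $X$ of paths with $\alpha\omega\beta\in X$ whenever $\omega\in X$ and $\alpha\omega\beta$ is defined. $\Gamma$: vertices the maximal paths, edges the sources and sinks of $Q$, edge $x$ joining the two maximal paths having $x$ as an endpoint. $\Gamma_I$: vertices the maximal paths in $I$, edges the sources/sinks $x$ with $\varepsilon_x\in I$. An indecomposable linearized semigroup ideal $I$ is of type II if $\Gamma_I$ is a chain (path graph) with at least two vertices which is not all of $\Gamma$. *)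

(* Defs.v *)
From HB Require Import structures.
From mathcomp Require Import all_boot all_order all_algebra.
Set Implicit Arguments. Unset Strict Implicit. Unset Printing Implicit Defensive.
Import GRing.Theory.
Local Open Scope ring_scope.

(* A quiver whose underlying graph is a cycle on the n vertices 'I_n:
   for each a : 'I_n there is an arrow a joining the vertices a and ordS a
   (successor mod n). *)
Section PathAlgebra.
Variable n : nat.
Variable o : 'I_n -> bool.

Definition asrc (a : 'I_n) : 'I_n := if o a then a else ordS a.
Definition atgt (a : 'I_n) : 'I_n := if o a then ordS a else a.

(* raw path: (starting vertex, arrows in order of traversal) *)
Definition rpath : Type := ('I_n * seq 'I_n)%type.

Fixpoint is_walk (x : 'I_n) (s : seq 'I_n) : bool :=
  if s is a :: s' then (asrc a == x) && is_walk (atgt a) s' else true.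

Definition pvalid (p : rpath) : bool := is_walk p.1 p.2.
Definition pstart (p : rpath) : 'I_n := p.1.
Definition pend (p : rpath) : 'I_n := foldl (fun _ a => atgt a) p.1 p.2.

Definition triv (x : 'I_n) : rpath := (x, [::]).

(* concatenation alpha beta = first beta, then alpha (defined when
   pend beta = pstart alpha) *)
Definition pcat (al be : rpath) : rpath := (be.1, be.2 ++ al.2).

Definition composable (al be : rpath) : Prop :=
  pvalid al /\ pvalid be /\ pend be = pstart al.

Definition is_source (x : 'I_n) : Prop := forall a, atgt a != x.
Definition is_sink (x : 'I_n) : Prop := forall a, asrc a != x.
Definition srcsink (x : 'I_n) : Prop := is_source x \/ is_sink x.

Definition admissible : Prop :=
  (forall p : rpath, pvalid p -> p.2 <> [::] -> pend p <> pstart p) /\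
  (exists x, is_source x).

Definition subpath (p q : rpath) : Prop :=
  exists a b : rpath, composable a p /\ composable p b /\ q = pcat a (pcat p b).

Definition maximal_path (p : rpath) : Prop :=
  pvalid p /\ forall q, pvalid q -> subpath p q -> q = p.

Definition endpoint (x : 'I_n) (p : rpath) : Prop := pstart p = x \/ pend p = x.

Variable k : fieldType.

(* The path algebra kQ: functions on raw paths vanishing on non-paths
   (the basis element of a path p is delta p). *)
Definition elt := rpath -> k.
Definition in_kQ (f : elt) : Prop := forall p, ~~ pvalid p -> f p = 0.
Definition zero_elt : elt := fun _ => 0.
Definition delta (p : rpath) : elt := fun q => (q == p)%:R.

(* multiplication: (f g)(p) = sum over factorisations p = alpha beta of
   f(alpha) g(beta) *)
Definition kmul (f g : elt) : elt := fun p =>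
  \sum_(i < (size p.2).+1)
     f (pend (p.1, take i p.2), drop i p.2) * g (p.1, take i p.2).

Definition is_ideal (I : elt -> Prop) : Prop :=
  (forall f, I f -> in_kQ f) /\ I zero_elt /\
  (forall f g, I f -> I g -> I (fun p => f p + g p)) /\
  (forall c f, I f -> I (fun p => c * f p)) /\
  (forall f g, in_kQ f -> I g -> I (kmul f g)) /\
  (forall f g, I f -> in_kQ g -> I (kmul f g)).

Definition nonzero_ideal (I : elt -> Prop) : Prop :=
  exists f, I f /\ f <> zero_elt.

Definition decomposes (I : elt -> Prop) : Prop :=
  exists A B : elt -> Prop,
    is_ideal A /\ is_ideal B /\ nonzero_ideal A /\ nonzero_ideal B /\
    (forall f, A f -> B f -> f = zero_elt) /\
    (forall f, I f <-> exists a b, A a /\ B b /\ f = (fun p => a p + b p)).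

Definition indecomposable_ideal (I : elt -> Prop) : Prop :=
  is_ideal I /\ nonzero_ideal I /\ ~ decomposes I.

Definition iprod (I J : elt -> Prop) : elt -> Prop := fun f =>
  exists m (F G : 'I_m -> elt), (forall i, I (F i) /\ J (G i)) /\
    f = (fun p => \sum_(i < m) kmul (F i) (G i) p).

Definition in_span (X : rpath -> Prop) (f : elt) : Prop :=
  exists s : seq (k * rpath), (forall cp, cp \in s -> X cp.2) /\
    f = (fun q => \sum_(cp <- s) cp.1 * delta cp.2 q).

Definition linearized_semigroup_ideal (I : elt -> Prop) : Prop :=
  is_ideal I /\
  exists X : rpath -> Prop,
    (forall p, X p -> pvalid p) /\
    (forall w al be, X w -> composable al w -> composable w be ->
        X (pcat al (pcat w be))) /\
    (forall f, I f <-> in_span X f).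

(* Gamma_I : vertices the maximal paths in I, edges the sources/sinks x
   with eps_x in I.  Gamma = Gamma for I = kQ. *)
Definition GV (I : elt -> Prop) (p : rpath) : Prop := maximal_path p /\ I (delta p).
Definition GE (I : elt -> Prop) (x : 'I_n) : Prop := srcsink x /\ I (delta (triv x)).

Definition is_chain (V : rpath -> Prop) (E : 'I_n -> Prop) : Prop :=
  exists (vs : seq rpath) (es : seq 'I_n),
    uniq vs /\ uniq es /\ size vs = (size es).+1 /\
    (forall p, V p <-> p \in vs) /\ (forall x, E x <-> x \in es) /\
    (forall i x, onth es i = Some x ->
       exists u v, onth vs i = Some u /\ onth vs i.+1 = Some v /\
                   endpoint x u /\ endpoint x v).

Definition type_II (I : elt -> Prop) : Prop :=
  indecomposable_ideal I /\ linearized_semigroup_ideal I /\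
  is_chain (GV I) (GE I) /\
  (exists p q, GV I p /\ GV I q /\ p <> q) /\
  ~ ((forall p, maximal_path p -> GV I p) /\ (forall x, srcsink x -> GE I x)).

End PathAlgebra.

(* Main.v *)
Require Import Defs.
From mathcomp Require Import all_boot all_order all_algebra.
From Stdlib Require Import Classical FunctionalExtensionality.
From mathcomp Require Import zify.
Set Implicit Arguments. Unset Strict Implicit. Unset Printing Implicit Defensive.
Import GRing.Theory.

Section Quiver.
Variable n : nat.
Variable o : 'I_n -> bool.
Hypothesis n2 : 1 < n.

Local Notation src := (asrc o).
Local Notation tgt := (atgt o).
Definition endv (x : 'I_n) (s : seq 'I_n) := foldl (fun _ a => tgt a) x s.
Definition arel (b c : 'I_n) := tgt b == src c.

Lemma ordS_neq (x : 'I_n) : ordS x != x.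
Proof.
apply/eqP => /(congr1 val) /=. case: x => x /= lx.
case: (ltnP x.+1 n) => h.
  by rewrite modn_small // => e; lia.
have -> : x.+1 = n by apply/eqP; rewrite eqn_leq lx h.
rewrite modnn => x0; move: h; rewrite -x0; by case: n n2 => [|[|]].
Qed.

Lemma src_neq_tgt (a : 'I_n) : src a != tgt a.
Proof. rewrite /asrc /atgt; case: (o a); [rewrite eq_sym|]; exact: ordS_neq. Qed.

Definition incident (a y : 'I_n) := (src a == y) || (tgt a == y).

Lemma incidE (a y : 'I_n) : incident a y -> (a == y) || (ordS a == y).
Proof. by rewrite /incident /asrc /atgt; case: (o a) => //; rewrite orbC. Qed.

Lemma pair_eq (u v y : 'I_n) : (u == y) || (ordS u == y) -> (v == y) || (ordS v == y) ->
  (u == y) = (v == y) -> u = v.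
Proof.
case: (eqVneq u y) => [->|nu] /=; case: (eqVneq v y) => [->|nv] //= /eqP hu /eqP hv _.
by apply: ordS_inj; rewrite hu hv.
Qed.

Lemma three_inc (a b c y : 'I_n) : incident a y -> incident b y -> incident c y ->
  [\/ a = b, a = c | b = c].
Proof.
move=> /incidE ha /incidE hb /incidE hc.
case: (boolP (a == y)) => ea; case: (boolP (b == y)) => eb.
- by constructor 1; apply: (pair_eq ha hb); rewrite ea eb.
- case: (boolP (c == y)) => ec.
    by constructor 2; apply: (pair_eq ha hc); rewrite ea ec.
  by constructor 3; apply: (pair_eq hb hc); rewrite (negbTE eb) (negbTE ec).
- case: (boolP (c == y)) => ec.
    by constructor 3; apply: (pair_eq hb hc); rewrite eb ec.
  by constructor 2; apply: (pair_eq ha hc); rewrite (negbTE ea) (negbTE ec).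
- by constructor 1; apply: (pair_eq ha hb); rewrite (negbTE ea) (negbTE eb).
Qed.

Lemma det_f (b c c' : 'I_n) : arel b c -> arel b c' -> c = c'.
Proof.
rewrite /arel => /eqP h1 /eqP h2.
have i1 : incident b (tgt b) by rewrite /incident eqxx orbT.
have i2 : incident c (tgt b) by rewrite /incident h1 eqxx.
have i3 : incident c' (tgt b) by rewrite /incident h2 eqxx.
case: (three_inc i1 i2 i3) => // e.
- by subst; move/eqP: h1; rewrite eq_sym (negbTE (src_neq_tgt _)).
- by subst; move/eqP: h2; rewrite eq_sym (negbTE (src_neq_tgt _)).
Qed.

Lemma det_b (b b' c : 'I_n) : arel b c -> arel b' c -> b = b'.
Proof.
rewrite /arel => /eqP h1 /eqP h2.
have i1 : incident c (src c) by rewrite /incident eqxx.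
have i2 : incident b (src c) by rewrite /incident h1 eqxx orbT.
have i3 : incident b' (src c) by rewrite /incident h2 eqxx orbT.
case: (three_inc i1 i2 i3) => // e.
- by subst; move/eqP: h1; rewrite eq_sym (negbTE (src_neq_tgt _)).
- by subst; move/eqP: h2; rewrite eq_sym (negbTE (src_neq_tgt _)).
Qed.

Lemma three_src (a b c y : 'I_n) : src a = y -> src b = y -> src c = y -> [\/ a = b, a = c | b = c].
Proof. by move=> ha hb hc; apply: (three_inc (y:=y)); rewrite /incident ?ha ?hb ?hc eqxx. Qed.
Lemma three_tgt (a b c y : 'I_n) : tgt a = y -> tgt b = y -> tgt c = y -> [\/ a = b, a = c | b = c].
Proof. by move=> ha hb hc; apply: (three_inc (y:=y)); rewrite /incident ?ha ?hb ?hc eqxx orbT. Qed.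

Lemma endv_cat x s1 s2 : endv x (s1 ++ s2) = endv (endv x s1) s2.
Proof. by rewrite /endv foldl_cat. Qed.
Lemma endv_cons x c s : endv x (c :: s) = endv (tgt c) s.
Proof. by []. Qed.
Lemma endv_rcons x s c : endv x (rcons s c) = tgt c.
Proof. by rewrite -cats1 endv_cat. Qed.
Lemma endv_last x c s : endv x (c :: s) = tgt (last c s).
Proof. by elim: s c => [|d s IH] c //=; rewrite -IH. Qed.
Lemma pendE (p : rpath n) : pend o p = endv p.1 p.2.
Proof. by []. Qed.

Lemma is_walk_cat x s1 s2 : is_walk o x (s1 ++ s2) = is_walk o x s1 && is_walk o (endv x s1) s2.
Proof. by elim: s1 x => [|a s1 IH] x //=; rewrite IH andbA. Qed.

Lemma is_walk_path c s : is_walk o (tgt c) s = path arel c s.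
Proof. by elim: s c => [|d s IH] c //=; rewrite IH /arel eq_sym. Qed.

Lemma is_walk_cons x c s : is_walk o x (c :: s) = (src c == x) && path arel c s.
Proof. by rewrite /= is_walk_path. Qed.

Definition acyclic := forall p : rpath n, pvalid o p -> p.2 <> [::] -> pend o p <> pstart p.

Lemma is_source_dec x : is_source o x \/ exists c, tgt c = x.
Proof.
case: (classic (exists c, tgt c = x)) => h; [by right|left] => c.
by apply/negP => /eqP e; apply: h; exists c.
Qed.
Lemma is_sink_dec x : is_sink o x \/ exists c, src c = x.
Proof.
case: (classic (exists c, src c = x)) => h; [by right|left] => c.
by apply/negP => /eqP e; apply: h; exists c.
Qed.

Lemma not_src_sink x : is_source o x -> is_sink o x -> False.
Proof.
move=> h1 h2; have := h1 x; have := h2 x.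
by rewrite /asrc /atgt; case: (o x); rewrite eqxx.
Qed.

Lemma walk_size (ac : acyclic) (p : rpath n) : pvalid o p -> size p.2 < n.
Proof.
case: p => x s; rewrite /pvalid /= => w.
rewrite ltnNge; apply/negP => hs.
pose f := fun i : 'I_n.+1 => endv x (take i s).
have nf : ~ injective f by move=> /leq_card; rewrite !card_ord ltnn.
have [i [j [fij ij]]] : exists i j, f i = f j /\ i < j.
  apply: NNPP => H; apply: nf => i j e; apply/eqP; rewrite -val_eqE; apply/negPn/negP => ne.
  rewrite neq_ltn in ne; case/orP: ne => lt; apply: H.
  - by exists i, j.
  - by exists j, i.
have hj : (j : nat) <= size s by apply: leq_trans hs; rewrite -ltnS.
have tk : take j s = take i s ++ take (j - i) (drop i s).
  by rewrite -takeD subnKC // ltnW.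
apply: (ac (endv x (take i s), take (j - i) (drop i s))) => /=.
- have wj : is_walk o x (take j s).
    by move: w; rewrite -{1}(cat_take_drop j s) is_walk_cat => /andP [].
  by move: wj; rewrite tk is_walk_cat => /andP [] _.
- move/(congr1 size); rewrite size_take size_drop.
  by case: ifP => _ /=; lia.
- by rewrite pendE /= -endv_cat -tk; exact: (esym fij).
Qed.

Lemma ext_fwd (ac : acyclic) (p : rpath n) : pvalid o p ->
  exists a, composable o a p /\ is_sink o (pend o (pcat a p)).
Proof.
move=> vp; have := walk_size ac vp.
move: {2}(n - size p.2) (erefl (n - size p.2)) => m; elim: m p vp => [|m IH] p vp hm hs.
  by move: hs; rewrite -subn_gt0 hm.
case: (is_sink_dec (pend o p)) => [hsk|[c hc]].
  exists (triv (pend o p)); split; first by split => //.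
  by rewrite /pcat /= cats0.
have vp' : pvalid o (p.1, rcons p.2 c).
  rewrite /pvalid /= -cats1 is_walk_cat; apply/andP; split => //=.
  by rewrite hc eqxx.
have hs' := walk_size ac vp'.
have hm' : n - size (p.1, rcons p.2 c).2 = m by rewrite /= size_rcons subnS hm.
have [a' [[va' [_ ea']] sk]] := IH _ vp' hm' hs'.
exists (pend o p, c :: a'.2); split.
  split; last by split.
  have e : a'.1 = tgt c by rewrite -[a'.1]/(pstart a') -ea' pendE endv_rcons.
  by rewrite /pvalid /= hc eqxx /= -e.
by move: sk; rewrite /pcat /= -cats1 -catA.
Qed.

Lemma ext_bwd (ac : acyclic) (p : rpath n) : pvalid o p ->
  exists b, composable o p b /\ is_source o (pstart (pcat p b)).
Proof.
move=> vp; have := walk_size ac vp.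
move: {2}(n - size p.2) (erefl (n - size p.2)) => m; elim: m p vp => [|m IH] p vp hm hs.
  by move: hs; rewrite -subn_gt0 hm.
case: (is_source_dec (pstart p)) => [hsk|[c hc]].
  exists (triv (pstart p)); split; first by split => //.
  by [].
have vp' : pvalid o (src c, c :: p.2).
  by rewrite /pvalid /= eqxx /= hc.
have hs' := walk_size ac vp'.
have hm' : n - size (src c, c :: p.2).2 = m by rewrite /= subnS hm.
have [b' [[_ [vb' eb']] sk]] := IH _ vp' hm' hs'.
exists (b'.1, rcons b'.2 c); split.
  split => //; split.
    have eb2 : pend o b' = src c := eb'.
    rewrite /pvalid /= -cats1 is_walk_cat; apply/andP; split; first exact: vb'.
    by rewrite /= -[endv b'.1 b'.2]/(pend o b') eb2 eqxx.
  by rewrite pendE /= endv_rcons hc.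
by move: sk; rewrite /pcat /pstart /=.
Qed.

Lemma sink_comp (a p : rpath n) : composable o a p -> is_sink o (pend o p) -> a = triv (pend o p).
Proof.
case: a => y [|c s] [va [vp e]] sk; first by rewrite /triv e.
exfalso; move: va; rewrite /pvalid /= => /andP [/eqP h _].
have e' : pend o p = y := e.
by have := sk c; rewrite h -e' eqxx.
Qed.

Lemma source_comp (p b : rpath n) : composable o p b -> is_source o (pstart p) -> b = triv (pstart p).
Proof.
case: b => y s [vp [vb e]] sr; case/lastP: s e vb => [|s c] e vb; first by rewrite /triv -e.
by move: (sr c); rewrite -e pendE /= endv_rcons eqxx.
Qed.

Lemma pvalid_pcat (a p : rpath n) : pend o p = pstart a ->
  pvalid o (pcat a p) = pvalid o p && pvalid o a.
Proof. by case: a p => y s [x t] /= e; rewrite /pvalid /= is_walk_cat -[endv x t]/(pend o (x,t)) e. Qed.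
Lemma pend_pcat (a p : rpath n) : pend o p = pstart a -> pend o (pcat a p) = pend o a.
Proof. by case: a p => y s [x t] /= e; rewrite !pendE /= endv_cat -[endv x t]/(pend o (x,t)) e. Qed.

Lemma pcat_triv_l (p : rpath n) : pcat (triv (pend o p)) p = p.
Proof. by case: p => x s; rewrite /pcat /= cats0. Qed.
Lemma pcat_triv_r (p : rpath n) : pcat p (triv (pstart p)) = p.
Proof. by case: p. Qed.

Lemma maximal_of (w : rpath n) : pvalid o w -> is_source o (pstart w) -> is_sink o (pend o w) ->
  maximal_path o w.
Proof.
move=> vw sr sk; split => // q vq [a [b [ca [cb ->]]]].
rewrite (sink_comp ca sk) (source_comp cb sr).
by rewrite pcat_triv_r pcat_triv_l.
Qed.

Lemma maximal_src (w : rpath n) : maximal_path o w -> is_source o (pstart w).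
Proof.
move=> [vw mw]; case: (is_source_dec (pstart w)) => // [[c hc]].
have vq : pvalid o (pcat w (src c, [:: c])) by rewrite /pvalid /= eqxx /= hc.
have sp : subpath o w (pcat w (src c, [:: c])).
  exists (triv (pend o w)), (src c, [:: c]); split; first by split.
  split; first by split => //; rewrite /pvalid /= eqxx.
  by rewrite /pcat /= cats0.
by move: (mw _ vq sp) => /(congr1 (fun p : rpath n => size p.2)) /= /eqP; rewrite eqn_leq ltnn.
Qed.

Lemma maximal_sink (w : rpath n) : maximal_path o w -> is_sink o (pend o w).
Proof.
move=> [vw mw]; case: (is_sink_dec (pend o w)) => // [[c hc]].
have vq : pvalid o (pcat (pend o w, [:: c]) w).
  by rewrite pvalid_pcat // vw /pvalid /= hc eqxx.
have sp : subpath o w (pcat (pend o w, [:: c]) w).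
  exists (pend o w, [:: c]), (triv (pstart w)); split.
    by split => //; rewrite /pvalid /= hc eqxx.
  split; first by split.
  by rewrite pcat_triv_r.
by move: (mw _ vq sp) => /(congr1 (fun p : rpath n => size p.2)) /=; rewrite size_cat /= addn1 => /eqP; rewrite eqn_leq ltnn.
Qed.

Lemma maximal_valid (w : rpath n) : maximal_path o w -> pvalid o w.
Proof. by case. Qed.

Lemma ext_max (ac : acyclic) (p : rpath n) : pvalid o p ->
  exists a b, composable o a p /\ composable o p b /\ maximal_path o (pcat a (pcat p b)).
Proof.
move=> vp; have [b [[_ [vb eb]] sr]] := ext_bwd ac vp.
have vpb : pvalid o (pcat p b) by rewrite pvalid_pcat // vb vp.
have [a [[va [_ ea]] sk]] := ext_fwd ac vpb.
have ea' : pend o p = pstart a by rewrite -ea pend_pcat.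
exists a, b; split; first by split.
split; first by split.
apply: maximal_of => //.
by rewrite pvalid_pcat // vpb va.
Qed.

End Quiver.

Lemma det_seq (T : eqType) (e : rel T) (term : pred T) :
  (forall x y y', e x y -> e x y' -> y = y') -> (forall x y, term x -> ~~ e x y) ->
  forall c R1 R2, path e c R1 -> path e c R2 -> term (last c R1) -> term (last c R2) -> R1 = R2.
Proof.
move=> det tm c R1; elim: R1 c => [|d1 R1 IH] c [|d2 R2] //=.
- by move=> _ /andP [h _] t; move: (tm _ d2 t); rewrite h.
- by move=> /andP [h _] _ _ t; move: (tm _ d1 t); rewrite h.
- move=> /andP [h1 p1] /andP [h2 p2] t1 t2.
  have e12 := det _ _ _ h1 h2; subst d2.
  by rewrite (IH d1 R2).
Qed.

Section Det.
Variable n : nat.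
Variable o : 'I_n -> bool.
Hypothesis n2 : 1 < n.
Local Notation src := (asrc o).
Local Notation tgt := (atgt o).

Lemma walk_rev x L c : is_walk o x (rcons L c) ->
  path (fun u v => arel o v u) c (rev L) /\ src (last c (rev L)) = x.
Proof.
elim: L x => [|d L IH] x /=; first by rewrite andbT => /eqP.
move=> /andP [/eqP hd w]; have [p1 l1] := IH _ w.
rewrite rev_cons rcons_path last_rcons p1 /= hd; split => //.
by rewrite /arel l1 eqxx.
Qed.

Lemma max_det (w w' : rpath n) L1 c R1 L2 R2 :
  maximal_path o w -> maximal_path o w' ->
  w.2 = L1 ++ c :: R1 -> w'.2 = L2 ++ c :: R2 -> w = w'.
Proof.
move=> mw mw' e1 e2.
have vw := maximal_valid mw; have vw' := maximal_valid mw'.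
have sk := maximal_sink mw; have sk' := maximal_sink mw'.
have sr := maximal_src mw; have sr' := maximal_src mw'.
have fw : forall (u : rpath n) L c R, pvalid o u -> u.2 = L ++ c :: R ->
    path (arel o) c R /\ is_walk o u.1 (rcons L c) /\ pend o u = tgt (last c R).
  move=> u L c0 R vu eu; move: vu; rewrite /pvalid eu is_walk_cat is_walk_cons.
  case/andP => h1 /andP [h2 h3]; split => //; split.
    by rewrite -cats1 is_walk_cat h1 /= h2.
  by rewrite pendE eu endv_cat endv_last.
have [p1 [w1 l1]] := fw _ _ _ _ vw e1.
have [p2 [w2 l2]] := fw _ _ _ _ vw' e2.
have eR : R1 = R2.
  apply: (det_seq (e := arel o) (term := fun b => [forall a, src a != tgt b])) p1 p2 _ _.
  - by move=> x y y'; apply: det_f.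
  - move=> x y /forallP t; rewrite /arel eq_sym; exact: t.
  - by apply/forallP => a; rewrite -l1; exact: sk.
  - by apply/forallP => a; rewrite -l2; exact: sk'.
have [q1 s1] := walk_rev w1.
have [q2 s2] := walk_rev w2.
have eL : rev L1 = rev L2.
  apply: (det_seq (e := fun u v => arel o v u) (term := fun b => [forall a, tgt a != src b])) q1 q2 _ _.
  - by move=> x y y' h h'; apply: det_b h h'.
  - by move=> x y /forallP t; exact: t.
  - by apply/forallP => a; rewrite s1; exact: sr.
  - by apply/forallP => a; rewrite s2; exact: sr'.
move: s1 s2; rewrite eL => s1 s2.
case: w w' e1 e2 s1 s2 {mw mw' vw vw' sk sk' sr sr' p1 w1 l1 p2 w2 l2} => x s [x' s'] /= -> -> -> ->.
by rewrite -(revK L1) eL revK eR.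
Qed.

Lemma max_nontriv (w : rpath n) : maximal_path o w -> w.2 <> [::].
Proof.
move=> mw e; apply: (@not_src_sink _ o (pstart w)); first exact: maximal_src.
by have := maximal_sink mw; rewrite pendE e.
Qed.

Lemma endpoint_src (w : rpath n) x : maximal_path o w -> endpoint o x w -> is_source o x -> pstart w = x.
Proof.
move=> mw [//|e] sx; exfalso; apply: (not_src_sink sx); rewrite -e; exact: maximal_sink.
Qed.
Lemma endpoint_sink (w : rpath n) x : maximal_path o w -> endpoint o x w -> is_sink o x -> pend o w = x.
Proof.
move=> mw [e|//] sx; exfalso; apply: (not_src_sink _ sx); rewrite -e; exact: maximal_src.
Qed.
Lemma endpoint_srcsink (w : rpath n) x : maximal_path o w -> endpoint o x w -> srcsink o x.
Proof.
move=> mw [e|e]; [left; rewrite -e; exact: maximal_src | right; rewrite -e; exact: maximal_sink].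
Qed.

Lemma max_head (w : rpath n) : maximal_path o w -> exists c R, w.2 = c :: R /\ src c = pstart w.
Proof.
move=> mw; have := max_nontriv mw; have := maximal_valid mw.
case: w {mw} => x [|c R] //= v _; exists c, R; split => //.
by move: v; rewrite /pvalid /= => /andP [/eqP].
Qed.

Lemma max_last (w : rpath n) : maximal_path o w -> exists L c, w.2 = rcons L c /\ tgt c = pend o w.
Proof.
move=> mw; have := max_nontriv mw.
case: w {mw} => x s /=; case/lastP: s => [//|L c] _; exists L, c; split => //.
by rewrite pendE /= endv_rcons.
Qed.

Lemma two_max (w1 w2 w3 : rpath n) x :
  maximal_path o w1 -> maximal_path o w2 -> maximal_path o w3 ->
  endpoint o x w1 -> endpoint o x w2 -> endpoint o x w3 ->
  [\/ w1 = w2, w1 = w3 | w2 = w3].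
Proof.
move=> m1 m2 m3 e1 e2 e3.
case: (endpoint_srcsink m1 e1) => [sx|sx].
- have h1 := endpoint_src m1 e1 sx; have h2 := endpoint_src m2 e2 sx; have h3 := endpoint_src m3 e3 sx.
  have [c1 [R1 [f1 g1]]] := max_head m1.
  have [c2 [R2 [f2 g2]]] := max_head m2.
  have [c3 [R3 [f3 g3]]] := max_head m3.
  have cat0 : forall c (R : seq 'I_n), c :: R = [::] ++ c :: R by [].
  rewrite h1 in g1; rewrite h2 in g2; rewrite h3 in g3.
  case: (three_src g1 g2 g3) => e; subst.
  + by constructor 1; apply: (max_det m1 m2 (L1 := [::]) (L2 := [::]) f1 f2).
  + by constructor 2; apply: (max_det m1 m3 (L1 := [::]) (L2 := [::]) f1 f3).
  + by constructor 3; apply: (max_det m2 m3 (L1 := [::]) (L2 := [::]) f2 f3).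
- have h1 := endpoint_sink m1 e1 sx; have h2 := endpoint_sink m2 e2 sx; have h3 := endpoint_sink m3 e3 sx.
  have [L1 [c1 [f1 g1]]] := max_last m1.
  have [L2 [c2 [f2 g2]]] := max_last m2.
  have [L3 [c3 [f3 g3]]] := max_last m3.
  rewrite h1 in g1; rewrite h2 in g2; rewrite h3 in g3.
  rewrite -cats1 in f1; rewrite -cats1 in f2; rewrite -cats1 in f3.
  case: (three_tgt g1 g2 g3) => e; subst.
  + by constructor 1; apply: (max_det m1 m2 f1 f2).
  + by constructor 2; apply: (max_det m1 m3 f1 f3).
  + by constructor 3; apply: (max_det m2 m3 f2 f3).
Qed.

Lemma two_exist (ac : acyclic o) x : srcsink o x ->
  exists w1 w2, [/\ maximal_path o w1, maximal_path o w2, w1 <> w2, endpoint o x w1 & endpoint o x w2].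
Proof.
pose c2 := ord_pred x.
have hc2 : ordS c2 = x by rewrite /c2 ord_predK.
have ne : x <> c2 by move=> e; move: (ordS_neq n2 x); rewrite {1}e hc2 eqxx.
have i1 : (src x == x) || (tgt x == x) by rewrite /asrc /atgt; case: (o x); rewrite eqxx ?orbT.
have i2 : (src c2 == x) || (tgt c2 == x) by rewrite /asrc /atgt hc2; case: (o c2); rewrite eqxx ?orbT.
case=> sx.
- have s1 : src x = x by case/orP: i1 => /eqP // h; move: (sx x); rewrite h eqxx.
  have s2 : src c2 = x by case/orP: i2 => /eqP // h; move: (sx c2); rewrite h eqxx.
  have mk : forall c, src c = x -> exists w, [/\ maximal_path o w, pstart w = x & exists R, w.2 = c :: R].
    move=> c sc; have vp : pvalid o (x, [:: c]) by rewrite /pvalid /= sc eqxx.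
    have [a [b [ca [cb mw]]]] := ext_max n2 ac vp.
    have eb := source_comp cb sx; subst b.
    exists (pcat a (pcat (x, [:: c]) (triv x))); split => //.
    by exists a.2.
  have [w1 [m1 p1 [R1 e1]]] := mk _ s1.
  have [w2 [m2 p2 [R2 e2]]] := mk _ s2.
  exists w1, w2; split => //; try by left.
  by move=> e; move: e2; rewrite -e e1 => -[h _]; exact: ne h.
- have s1 : tgt x = x by case/orP: i1 => /eqP // h; move: (sx x); rewrite h eqxx.
  have s2 : tgt c2 = x by case/orP: i2 => /eqP // h; move: (sx c2); rewrite h eqxx.
  have mk : forall c, tgt c = x -> exists w, [/\ maximal_path o w, pend o w = x & exists L, w.2 = rcons L c].
    move=> c sc; have vp : pvalid o (src c, [:: c]) by rewrite /pvalid /= eqxx.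
    have pe : pend o (src c, [:: c]) = x by rewrite pendE /= sc.
    have [a [b [ca [cb mw]]]] := ext_max n2 ac vp.
    have ea := sink_comp ca; rewrite pe in ea; have {ea} ea := ea sx; subst a.
    exists (pcat (triv x) (pcat (src c, [:: c]) b)); split => //.
      by rewrite pend_pcat //= pend_pcat //; case: cb => _ [].
    by exists b.2; rewrite /= cats0 cats1.
  have [w1 [m1 p1 [R1 e1]]] := mk _ s1.
  have [w2 [m2 p2 [R2 e2]]] := mk _ s2.
  exists w1, w2; split => //; try by right.
  by move=> e; move: e2; rewrite -e e1 => /rcons_inj [_ h]; exact: ne h.
Qed.

Lemma interior (w a b : rpath n) y : maximal_path o w ->
  composable o a (y, [::]) -> composable o (y, [::]) b -> w = pcat a (pcat (y, [::]) b) ->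
  endpoint o y w \/ exists B cin cout A, w.2 = B ++ cin :: cout :: A /\ tgt cin = y /\ src cout = y.
Proof.
move=> mw [va [_ ea]] [_ [vb eb]] ew.
case/lastP Hb : b.2 => [|B cin].
  left; left; rewrite ew /pstart /=; move: eb; rewrite pendE.
  by case: b Hb {vb ew} => ? s /= ->.
case Ha : a.2 => [|cout A].
  left; right; rewrite ew pend_pcat; last by rewrite pend_pcat.
  by rewrite pendE Ha /=; symmetry; exact: ea.
right; exists B, cin, cout, A; split.
  by rewrite ew /= Hb Ha cats0 cat_rcons.
split.
  by move: eb; rewrite pendE Hb endv_rcons.
by move: va; rewrite /pvalid Ha /= => /andP [/eqP ->].
Qed.

Lemma lemmaU (w w' p : rpath n) : maximal_path o w -> maximal_path o w' ->
  subpath o p w -> subpath o p w' -> w <> w' ->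
  exists y, p = triv y /\ endpoint o y w /\ endpoint o y w'.
Proof.
move=> m m' [a [b [ca [cb ew]]]] [a' [b' [ca' [cb' ew']]]] ne.
case: p ca cb ew ca' cb' ew' => y [|c s] ca cb ew ca' cb' ew'; last first.
  exfalso; apply: ne; apply: (max_det m m' (L1 := b.2) (L2 := b'.2) (c := c) (R1 := s ++ a.2) (R2 := s ++ a'.2)).
    by rewrite ew /= -catA.
  by rewrite ew' /= -catA.
exists y; split => //.
have notend : forall (cin cout : 'I_n) (u : rpath n), tgt cin = y -> src cout = y -> maximal_path o u -> ~ endpoint o y u.
  move=> cin cout u h1 h2 mu eu; case: (endpoint_srcsink mu eu) => sx.
    by move: (sx cin); rewrite h1 eqxx.
  by move: (sx cout); rewrite h2 eqxx.
case: (interior m ca cb ew) => [e1|[B [cin [cout [A [f1 [g1 h1]]]]]]];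
  case: (interior m' ca' cb' ew') => [e2|[B' [cin' [cout' [A' [f2 [g2 h2]]]]]]].
- by [].
- by exfalso; apply: (notend cin' cout' w g2 h2 m e1).
- by exfalso; apply: (notend cin cout w' g1 h1 m' e2).
- exfalso; apply: ne.
  have ec : cin = cin' by apply: (@det_b _ o n2 _ _ cout); rewrite /arel ?g1 ?g2 h1 eqxx.
  subst cin'.
  by apply: (max_det m m' f1 f2).
Qed.

End Det.

Section Alg.
Variable n : nat.
Variable o : 'I_n -> bool.
Variable k : fieldType.
Hypothesis n2 : 1 < n.
Local Notation elt := (elt n k).
Local Notation dl := (delta k).

Definition lin (s : seq (k * rpath n)) : elt := fun q => (\sum_(cp <- s) cp.1 * dl cp.2 q)%R.

Lemma kmul_dd (a b q : rpath n) :
  kmul o (dl a) (dl b) q = (((pend o b == pstart a) && (q == pcat a b))%:R)%R.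
Proof.
rewrite /kmul /delta.
have key : forall i : 'I_(size q.2).+1,
    ((pend o (q.1, take i q.2), drop i q.2) == a) && ((q.1, take i q.2) == b) ->
    [/\ pend o b == pstart a, q == pcat a b & (i : nat) == size b.2].
  move=> i /andP [/eqP ea /eqP eb]; rewrite -ea -eb /pstart /=; split => //.
    by rewrite /pcat /= cat_take_drop -surjective_pairing eqxx.
  by rewrite size_take; case: ltnP => //= h; rewrite eqn_leq h -ltnS ltn_ord.
case: (boolP ((pend o b == pstart a) && (q == pcat a b))) => H.
  case/andP: H => /eqP e1 /eqP e2.
  have hi : size b.2 < (size q.2).+1 by rewrite e2 /= size_cat ltnS leq_addr.
  rewrite (bigD1 (Ordinal hi)) //= big1 ?addr0.
    rewrite e2 /= take_size_cat // drop_size_cat //.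
    rewrite -!surjective_pairing -[pend o b]/(pend o b) e1 -surjective_pairing.
    by rewrite !eqxx mulr1.
  move=> i ne; case: (boolP ((pend o (q.1, take i q.2), drop i q.2) == a)) => h1;
    case: (boolP ((q.1, take i q.2) == b)) => h2; rewrite ?mulr0 ?mul0r //.
  have [_ _ /eqP ei] := key i (introT andP (conj h1 h2)).
  by move: ne; rewrite -val_eqE /= ei eqxx.
rewrite big1 //= => i _.
case: (boolP ((pend o (q.1, take i q.2), drop i q.2) == a)) => h1;
  case: (boolP ((q.1, take i q.2) == b)) => h2; rewrite ?mulr0 ?mul0r //.
have [e1 e2 _] := key i (introT andP (conj h1 h2)).
by move: H; rewrite e1 e2.
Qed.

Lemma kmul_dd_comp (a b : rpath n) : pend o b = pstart a ->
  kmul o (dl a) (dl b) = dl (pcat a b).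
Proof.
move=> e; apply: functional_extensionality => q.
by rewrite kmul_dd e eqxx /= /delta.
Qed.

Lemma kmul_suml s g q : kmul o (lin s) g q = (\sum_(cp <- s) cp.1 * kmul o (dl cp.2) g q)%R.
Proof.
rewrite /kmul /lin.
under eq_bigr do rewrite mulr_suml.
rewrite exchange_big /=; apply: eq_bigr => cp _.
rewrite mulr_sumr; apply: eq_bigr => i _; by rewrite mulrA.
Qed.

Lemma kmul_sumr f s q : kmul o f (lin s) q = (\sum_(cp <- s) cp.1 * kmul o f (dl cp.2) q)%R.
Proof.
rewrite /kmul /lin.
under eq_bigr do rewrite mulr_sumr.
rewrite exchange_big /=; apply: eq_bigr => cp _.
rewrite mulr_sumr; apply: eq_bigr => i _; by rewrite mulrCA.
Qed.

Definition lin_prod (s t : seq (k * rpath n)) : seq (k * rpath n) :=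
  flatten [seq [seq ((a.1 * b.1)%R, pcat a.2 b.2) | b <- t & pend o b.2 == pstart a.2] | a <- s].

Lemma kmul_lin (s t : seq (k * rpath n)) : kmul o (lin s) (lin t) = lin (lin_prod s t).
Proof.
apply: functional_extensionality => q.
rewrite kmul_suml /lin /lin_prod big_flatten /= big_map.
apply: eq_bigr => a _; rewrite kmul_sumr mulr_sumr big_map big_filter [RHS]big_mkcond /=.
apply: eq_bigr => b _; rewrite kmul_dd.
case: (pend o b.2 == pstart a.2) => /=.
  by rewrite /delta mulrA.
by rewrite !mulr0.
Qed.

Lemma mem_lin_prod s t cp : cp \in lin_prod s t ->
  exists a b, [/\ a \in s, b \in t, pend o b.2 = pstart a.2 & cp = ((a.1 * b.1)%R, pcat a.2 b.2)].
Proof.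
rewrite /lin_prod => /flattenP [l /mapP [a ha ->]] /mapP [b].
rewrite mem_filter => /andP [/eqP e hb] ->.
by exists a, b.
Qed.

Lemma lin_nil : lin [::] = @zero_elt n k.
Proof. by apply: functional_extensionality => q; rewrite /lin big_nil. Qed.
Lemma lin_cons (cp : k * rpath n) s : lin (cp :: s) = (fun q => cp.1 * dl cp.2 q + lin s q)%R.
Proof. by apply: functional_extensionality => q; rewrite /lin big_cons. Qed.
Lemma lin_cat s t : lin (s ++ t) = (fun q => lin s q + lin t q)%R.
Proof. by apply: functional_extensionality => q; rewrite /lin big_cat. Qed.
Lemma lin_scale (c : k) s : lin [seq ((c * cp.1)%R, cp.2) | cp <- s] = (fun q => c * lin s q)%R.
Proof.
apply: functional_extensionality => q; rewrite /lin big_map mulr_sumr.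
by apply: eq_bigr => cp _; rewrite mulrA.
Qed.
Lemma lin_delta p : lin [:: (1%R, p)] = dl p.
Proof. by apply: functional_extensionality => q; rewrite /lin big_cons big_nil mul1r addr0. Qed.

Lemma lin_nz s q : lin s q != 0%R -> exists cp, cp \in s /\ cp.2 = q.
Proof.
move=> h; apply: NNPP => H; move/eqP: h; apply.
rewrite /lin big_seq big1 // => cp hcp.
rewrite /delta; case: eqP => [e|]; last by rewrite mulr0.
by exfalso; apply: H; exists cp.
Qed.

Lemma span_supp (Y : rpath n -> Prop) (f : elt) q : in_span Y f -> f q != 0%R -> Y q.
Proof.
move=> [s [hs ->]] h; have [cp [hcp <-]] := lin_nz h; exact: hs.
Qed.

Lemma span_lin (Y : rpath n -> Prop) (s : seq (k * rpath n)) : (forall cp, cp \in s -> Y cp.2) -> in_span Y (lin s).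
Proof. by move=> h; exists s. Qed.

Lemma span_delta (Y : rpath n -> Prop) p : Y p -> @in_span n k Y (dl p).
Proof. by move=> h; exists [:: (1%R, p)]; split; [move=> cp; rewrite inE => /eqP -> | rewrite -lin_delta]. Qed.

Lemma span_add (Y : rpath n -> Prop) (f g : elt) : in_span Y f -> in_span Y g -> in_span Y (fun q => f q + g q)%R.
Proof.
move=> [s [hs ->]] [t [ht ->]]; exists (s ++ t); split; last by rewrite -lin_cat.
by move=> cp; rewrite mem_cat => /orP [/hs|/ht].
Qed.

Lemma span_scale (Y : rpath n -> Prop) (c : k) (f : elt) : in_span Y f -> in_span Y (fun q => c * f q)%R.
Proof.
move=> [s [hs ->]]; exists [seq ((c * cp.1)%R, cp.2) | cp <- s]; split; last by rewrite -lin_scale.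
by move=> cp /mapP [cp' h ->] /=; exact: hs.
Qed.

Lemma span_zero (Y : rpath n -> Prop) : @in_span n k Y (@zero_elt n k).
Proof. by exists [::]; split => //; symmetry; exact: lin_nil. Qed.

Lemma span_mono (Y Y' : rpath n -> Prop) (f : elt) : (forall p, Y p -> Y' p) -> in_span Y f -> in_span Y' f.
Proof. by move=> h [s [hs ->]]; exists s; split => // cp /hs /h. Qed.

Lemma delta_nz p : dl p <> @zero_elt n k.
Proof. by move=> /(congr1 (fun f => f p)); rewrite /delta /zero_elt eqxx => /eqP; rewrite oner_eq0. Qed.

Lemma nz_point (f : elt) : f <> @zero_elt n k -> exists q, f q != 0%R.
Proof.
move=> h; apply: NNPP => H; apply: h; apply: functional_extensionality => q.
by apply/eqP; apply: NNPP => h'; apply: H; exists q; apply/negP.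
Qed.

Lemma ideal_lin (I : elt -> Prop) (s : seq (k * rpath n)) : is_ideal o I -> (forall cp, cp \in s -> I (dl cp.2)) -> I (lin s).
Proof.
move=> [_ [z [ad [sc _]]]]; elim: s => [|cp s IH] h; first by rewrite lin_nil.
rewrite lin_cons; apply: ad; first by apply: sc; apply: h; rewrite inE eqxx.
by apply: IH => cp' h'; apply: h; rewrite inE h' orbT.
Qed.

Lemma lsi_delta (I : elt -> Prop) : linearized_semigroup_ideal o I ->
  forall f, I f -> exists s, (forall cp, cp \in s -> I (dl cp.2)) /\ f = lin s.
Proof.
move=> [_ [X [_ [_ hX]]]] f /hX [s [hs ->]]; exists s; split => // cp /hs h.
by apply/hX; apply: span_delta.
Qed.

Lemma delta_in_kQ p : pvalid o p -> in_kQ o (dl p).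
Proof. by move=> v q nq; rewrite /delta; case: eqP => // e; move: nq; rewrite e v. Qed.

Fixpoint allseq (m : nat) : seq (seq 'I_n) :=
  if m is m'.+1 then [::] :: [seq a :: s | a <- enum 'I_n, s <- allseq m'] else [:: [::]].

Lemma mem_allseq m s : size s <= m -> s \in allseq m.
Proof.
elim: m s => [|m IH] [|a s] //= h; rewrite inE /=.
by apply/allpairsP; exists (a, s); rewrite mem_enum IH.
Qed.

Definition allvalid : seq (rpath n) :=
  [seq p <- undup [seq (x, s) | x <- enum 'I_n, s <- allseq n] | pvalid o p].

Lemma allvalid_uniq : uniq allvalid.
Proof. by rewrite filter_uniq // undup_uniq. Qed.

Lemma mem_allvalid (ac : acyclic o) p : pvalid o p -> p \in allvalid.
Proof.
move=> v; rewrite mem_filter v mem_undup /=; case: p v => x s v.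
apply/allpairsP; exists (x, s); rewrite mem_enum mem_allseq //.
by apply: ltnW; apply: (walk_size n2 ac v).
Qed.

Lemma expand (ac : acyclic o) (f : elt) : in_kQ o f -> f = lin [seq (f p, p) | p <- allvalid].
Proof.
move=> hf; apply: functional_extensionality => q; rewrite /lin big_map.
case: (boolP (pvalid o q)) => vq.
  rewrite (bigD1_seq q) ?allvalid_uniq ?mem_allvalid //= /delta eqxx mulr1 big1_seq ?addr0 //.
  by move=> p /andP [ne _]; rewrite eq_sym (negbTE ne) mulr0.
rewrite hf // big1_seq // => p /andP [_ hp].
have vp : pvalid o p by move: hp; rewrite /allvalid mem_filter => /andP [].
rewrite /delta /=; case: eqP => [e|]; last by rewrite mulr0.
by move: vq; rewrite e vp.
Qed.

Definition ext_closed (Y : rpath n -> Prop) :=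
  forall w al be, Y w -> composable o al w -> composable o w be -> Y (pcat al (pcat w be)).

Lemma span_ideal (ac : acyclic o) (Y : rpath n -> Prop) :
  (forall p, Y p -> pvalid o p) -> ext_closed Y -> is_ideal o (@in_span n k Y).
Proof.
move=> vY cY.
have vall : forall p, p \in allvalid -> pvalid o p by move=> p; rewrite mem_filter => /andP [].
split.
  move=> f hf q nq; apply/eqP; apply: NNPP => h.
  by move: nq; rewrite (vY _ (span_supp hf (introN idP h))).
split; first exact: span_zero.
split; first by move=> f g; apply: span_add.
split; first by move=> c f; apply: span_scale.
split.
  move=> f g hf [t [ht ->]]; rewrite (expand ac hf) kmul_lin; apply: span_lin.
  move=> cp /mem_lin_prod [a [b [ha hb e ->]]] /=.
  move: ha => /mapP [p hp ea]; subst a => /=.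
  have vp := vall _ hp.
  have yb := ht _ hb.
  rewrite -(pcat_triv_r b.2); apply: cY => //.
    by split => //; split; [exact: vY | exact: e].
  by split; [exact: vY|split].
move=> f g [t [ht ->]] hf; rewrite (expand ac hf) kmul_lin; apply: span_lin.
move=> cp /mem_lin_prod [a [b [ha hb e ->]]] /=.
move: hb => /mapP [p hp eb]; subst b => /=.
have vp := vall _ hp.
have ya := ht _ ha.
move: e => /= e.
have -> : pcat a.2 p = pcat (triv (pend o a.2)) (pcat a.2 p) by rewrite /pcat /= cats0.
apply: cY => //.
  by split => //; split => //; exact: vY.
by split; [exact: vY | split => //].
Qed.

End Alg.

Lemma catsI (T : Type) (t s1 s2 : seq T) : t ++ s1 = t ++ s2 -> s1 = s2.
Proof. by elim: t => //= x t IH [] /IH. Qed.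
Lemma catIs (T : Type) (t s1 s2 : seq T) : s1 ++ t = s2 ++ t -> s1 = s2.
Proof. by move/(congr1 rev); rewrite !rev_cat => /catsI /(congr1 rev); rewrite !revK. Qed.

Section Zfacts.
Variable k : fieldType.
Variable n : nat.
Variable o : 'I_n -> bool.
Variables I J : elt n k -> Prop.
Hypothesis n2 : 1 < n.
Hypothesis ac : acyclic o.
Hypotheses (iI : is_ideal o I) (iJ : is_ideal o J).
Hypotheses (lI : linearized_semigroup_ideal o I) (lJ : linearized_semigroup_ideal o J).
Local Notation elt := (elt n k).
Local Notation dl := (delta k).

Lemma ideal_valid (C : elt -> Prop) p : is_ideal o C -> C (dl p) -> pvalid o p.
Proof.
move=> [kq _] h; apply/negPn/negP => nv; have := kq _ h p nv.
by rewrite /delta eqxx => /eqP; rewrite oner_eq0.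
Qed.

Lemma ideal_ext (C : elt -> Prop) (a p b : rpath n) : is_ideal o C -> C (dl p) ->
  composable o a p -> composable o p b -> C (dl (pcat a (pcat p b))).
Proof.
move=> iC hp [va [_ ea]] [_ [vb eb]]; have [_ [_ [_ [_ [cl cr]]]]] := iC.
have e1 : pend o (pcat p b) = pstart a by rewrite pend_pcat.
rewrite -(kmul_dd_comp k e1) -(kmul_dd_comp k eb).
apply: cl; first exact: delta_in_kQ.
by apply: cr => //; exact: delta_in_kQ.
Qed.

Lemma ideal_scale (C : elt -> Prop) (c : k) f : is_ideal o C -> C f -> C (fun q => c * f q)%R.
Proof. by move=> [_ [_ [_ [sc _]]]]; apply: sc. Qed.
Lemma ideal_add (C : elt -> Prop) f g : is_ideal o C -> C f -> C g -> C (fun q => f q + g q)%R.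
Proof. by move=> [_ [_ [ad _]]]; apply: ad. Qed.
Lemma ideal_mull (C : elt -> Prop) f g : is_ideal o C -> in_kQ o f -> C g -> C (kmul o f g).
Proof. by move=> [_ [_ [_ [_ [cl _]]]]]; apply: cl. Qed.
Lemma ideal_mulr (C : elt -> Prop) f g : is_ideal o C -> C f -> in_kQ o g -> C (kmul o f g).
Proof. by move=> [_ [_ [_ [_ [_ cr]]]]]; apply: cr. Qed.
Lemma ideal_kQ (C : elt -> Prop) f : is_ideal o C -> C f -> in_kQ o f.
Proof. by move=> [kq _]; apply: kq. Qed.

Definition ZZp (p : rpath n) := exists al be, composable o al be /\ I (dl al) /\ J (dl be) /\ p = pcat al be.

Lemma Z_I p : ZZp p -> I (dl p).
Proof.
move=> [al [be [[va [vb e]] [hI [hJ ->]]]]]; rewrite -(kmul_dd_comp k e).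
by apply: ideal_mulr => //; exact: delta_in_kQ.
Qed.
Lemma Z_J p : ZZp p -> J (dl p).
Proof.
move=> [al [be [[va [vb e]] [hI [hJ ->]]]]]; rewrite -(kmul_dd_comp k e).
by apply: ideal_mull => //; exact: delta_in_kQ.
Qed.
Lemma Z_valid p : ZZp p -> pvalid o p.
Proof. by move/Z_I; apply: ideal_valid. Qed.

Lemma Z_ext : ext_closed o ZZp.
Proof.
move=> w a b [al [be [[va [vb e]] [hI [hJ ->]]]]] [vA [vw ea]] [vw' [vB eb]].
have ea' : pend o al = pstart a by rewrite -(pend_pcat e).
have eb' : pend o b = pstart be := eb.
exists (pcat a al), (pcat be b); split.
  split; first by rewrite pvalid_pcat // va vA.
  split; first by rewrite pvalid_pcat // vB vb.
  by rewrite (pend_pcat eb').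
split.
  have -> : pcat a al = pcat a (pcat al (triv (pstart al))) by rewrite pcat_triv_r.
  by apply: ideal_ext => //; split => //; split.
split.
  have -> : pcat be b = pcat (triv (pend o be)) (pcat be b) by rewrite /pcat /= cats0.
  by apply: ideal_ext => //; split => //; split.
by rewrite /pcat /= !catA.
Qed.

Lemma Z_sub p w : ZZp p -> subpath o p w -> ZZp w.
Proof. by move=> hp [a [b [ca [cb ->]]]]; apply: Z_ext. Qed.

Lemma sum_span (Y : rpath n -> Prop) m (h : 'I_m -> elt) :
  (forall i, in_span Y (h i)) -> in_span Y (fun p => \sum_(i < m) h i p)%R.
Proof.
elim: m h => [|m IH] h hh.
  have -> : (fun p => \sum_(i < 0) h i p)%R = @zero_elt n k.
    by apply: functional_extensionality => p; rewrite big_ord0.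
  exact: span_zero.
have -> : (fun p => \sum_(i < m.+1) h i p)%R =
   (fun p => (\sum_(i < m) h (widen_ord (leqnSn m) i) p) + h ord_max p)%R.
  by apply: functional_extensionality => p; rewrite big_ord_recr.
by apply: span_add; [apply: IH => i|].
Qed.

Lemma iprod_span f : iprod o I J f -> in_span ZZp f.
Proof.
move=> [m [F [G [h ->]]]]; apply: sum_span => i.
have [hF hG] := h i.
have [s [hs ->]] := lsi_delta lI hF.
have [t [ht ->]] := lsi_delta lJ hG.
rewrite kmul_lin; apply: span_lin => cp /mem_lin_prod [a [b [ha hb e ->]]] /=.
exists a.2, b.2; split.
  split; first exact: (ideal_valid iI (hs _ ha)).
  by split; first exact: (ideal_valid iJ (ht _ hb)).
by split; [exact: hs | split; [exact: ht|]].
Qed.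

Lemma kmul_scalel (c : k) (f g : elt) q : kmul o (fun r => c * f r)%R g q = (c * kmul o f g q)%R.
Proof. by rewrite /kmul mulr_sumr; apply: eq_bigr => i _; rewrite mulrA. Qed.
Lemma kmul_addl (f1 f2 g : elt) q : kmul o (fun r => f1 r + f2 r)%R g q = (kmul o f1 g q + kmul o f2 g q)%R.
Proof. by rewrite /kmul -big_split; apply: eq_bigr => i _; rewrite mulrDl. Qed.
Lemma kmul_addr (f g1 g2 : elt) q : kmul o f (fun r => g1 r + g2 r)%R q = (kmul o f g1 q + kmul o f g2 q)%R.
Proof. by rewrite /kmul -big_split; apply: eq_bigr => i _; rewrite mulrDr. Qed.

Lemma span_iprod f : in_span ZZp f -> iprod o I J f.
Proof.
move=> [s [hs ->]]; elim: s hs => [|cp s IH] hs.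
  exists 0, (fun _ => @zero_elt n k), (fun _ => @zero_elt n k); split; first by case.
  by apply: functional_extensionality => p; rewrite big_ord0 big_nil.
have hs' : forall cp', cp' \in s -> ZZp cp'.2 by move=> cp' h; apply: hs; rewrite inE h orbT.
have [m [F [G [hFG e]]]] := IH hs'.
have [al [be [[va [vb ec]] [hI [hJ epc]]]]] := hs cp (mem_head _ _).
pose F' := fun i : 'I_m.+1 => if unlift ord_max i is Some j then F j else (fun q => cp.1 * dl al q)%R.
pose G' := fun i : 'I_m.+1 => if unlift ord_max i is Some j then G j else dl be.
have uw : forall j : 'I_m, unlift ord_max (widen_ord (leqnSn m) j) = Some j.
  move=> j; have -> : widen_ord (leqnSn m) j = lift ord_max j by apply: val_inj => /=; rewrite /bump leqNgt ltn_ord.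
  by rewrite liftK.
exists m.+1, F', G'; split.
  move=> i; rewrite /F' /G'; case: (unlift ord_max i) => [j|]; first exact: hFG.
  by split => //; apply: ideal_scale.
apply: functional_extensionality => p.
have ep := congr1 (fun f => f p) e; simpl in ep.
rewrite big_ord_recr /= big_cons ep [RHS]addrC.
congr (_ + _)%R.
  by rewrite /F' /G' unlift_none kmul_scalel (kmul_dd_comp k ec) -epc.
by apply: eq_bigr => i _; rewrite /F' /G' uw.
Qed.

Lemma Z_triv x : GE o I x -> GE o J x -> ZZp (triv x).
Proof.
move=> [_ hI] [_ hJ]; exists (triv x), (triv x); split => //.
Qed.

Lemma Z_of_edge w x : GV o I w -> GV o J w -> GE o I x -> GE o J x -> endpoint o x w -> ZZp w.
Proof.
move=> [mw hIw] [_ hJw] [_ hIx] [_ hJx] [e|e].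
  exists w, (triv x); split; first by split; [exact: maximal_valid|split].
  by split => //; split => //; rewrite -e pcat_triv_r.
exists (triv x), w; split; first by split => //; split; [exact: maximal_valid|].
by split => //; split => //; rewrite -e pcat_triv_l.
Qed.

Lemma Z_GV w : ZZp w -> maximal_path o w -> GV o I w /\ GV o J w.
Proof. by move=> z m; split; split => //; [exact: Z_I | exact: Z_J]. Qed.

Lemma kmul_dl_lin (a r : rpath n) t : pend o r = pstart a ->
  kmul o (dl a) (lin t) (pcat a r) = lin t r.
Proof.
move=> e; rewrite kmul_sumr /lin; apply: eq_bigr => cp _; rewrite kmul_dd /delta.
case: (eqVneq r cp.2) => [<-|ne]; first by rewrite e !eqxx.
case: (eqVneq (pcat a r) (pcat a cp.2)) => [h|]; last by rewrite andbF.
exfalso; move/eqP: ne; apply; move: h.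
by case: r {e} => x s; case: cp => c [y u]; rewrite /pcat /= => -[-> /catIs ->].
Qed.

Lemma kmul_lin_dr (b r : rpath n) t : pend o b = pstart r ->
  kmul o (lin t) (dl b) (pcat r b) = lin t r.
Proof.
move=> e; rewrite kmul_suml /lin; apply: eq_bigr => cp _; rewrite kmul_dd /delta.
case: (eqVneq r cp.2) => [<-|ne]; first by rewrite e !eqxx.
case: (eqVneq (pend o b) (pstart cp.2)) => [e2|]; last by [].
case: (eqVneq (pcat r b) (pcat cp.2 b)) => [h|]; last by rewrite andbF.
exfalso; move/eqP: ne; apply; move: h e e2.
case: r => x s; case: cp => c [y u]; rewrite /pcat /= => -[/catsI ->] e e2.
by rewrite -[x]/(pstart (x, s)) -e e2.
Qed.

Lemma single_point (C : elt -> Prop) g t : is_ideal o C -> C g -> g <> @zero_elt n k ->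
  (forall q, g q != 0%R -> q = t) -> C (dl t).
Proof.
move=> iC hg nz sup.
have gt : g t != 0%R.
  apply/negP => /eqP h0; apply: nz; apply: functional_extensionality => q.
  case: (eqVneq (g q) 0%R) => // /sup e; by rewrite e h0.
have -> : dl t = (fun q => (g t)^-1 * g q)%R.
  apply: functional_extensionality => q; rewrite /delta.
  case: (eqVneq q t) => [->|ne]; first by rewrite mulVf.
  case: (eqVneq (g q) 0%R) => [->|/sup e]; first by rewrite mulr0.
  by move: ne; rewrite e eqxx.
exact: ideal_scale.
Qed.

Lemma extract (C : elt -> Prop) f : is_ideal o C -> (forall g, C g -> in_span ZZp g) ->
  C f -> f <> @zero_elt n k ->
  exists g, C g /\ g <> @zero_elt n k /\ in_span (fun r => ZZp r /\ maximal_path o r) g.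
Proof.
move=> iC sub hf nz.
have [q hq] := nz_point nz.
have vq : pvalid o q by apply/negPn/negP => nv; move: hq; rewrite (ideal_kQ iC hf nv) eqxx.
have [a [b [ca [cb mw]]]] := ext_max n2 ac vq.
have [s [hs ef0]] := sub _ hf.
have ef : f = lin s := ef0.
have [va [_ ea]] := ca; have [_ [vb eb]] := cb.
exists (kmul o (dl a) (kmul o f (dl b))); split.
  apply: ideal_mull => //; first exact: delta_in_kQ.
  by apply: ideal_mulr => //; exact: delta_in_kQ.
have eg : kmul o (dl a) (kmul o f (dl b)) = lin (lin_prod o [:: (1%R, a)] (lin_prod o s [:: (1%R, b)])).
  by rewrite ef -(lin_delta k a) -(lin_delta k b) !kmul_lin.
split.
  move=> h0; have := congr1 (fun g => g (pcat a (pcat q b))) h0; rewrite /zero_elt /=.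
  rewrite (_ : kmul o f (dl b) = lin (lin_prod o s [:: (1%R, b)])); last first.
    by rewrite ef -(lin_delta k b) kmul_lin.
  rewrite kmul_dl_lin; last by rewrite pend_pcat.
  rewrite -kmul_lin lin_delta kmul_lin_dr // -ef.
  by move/eqP; rewrite (negbTE hq).
rewrite eg; apply: span_lin => cp /mem_lin_prod [a' [cp' [ha' hcp' e1 ->]]] /=.
move: ha'; rewrite inE => /eqP ha'; subst a' => /=.
move: hcp' e1 => /mem_lin_prod [cp2 [b' [h2 hb' e2 ->]]] /= e1.
move: hb'; rewrite inE => /eqP hb'; subst b' => /=.
move: e2 e1 => /= e2 e1.
have z2 := hs _ h2.
have v2 := Z_valid z2.
have e1' : pend o cp2.2 = pstart a by rewrite -e1 pend_pcat.
split; first by apply: Z_ext.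
apply: maximal_of.
- by rewrite pvalid_pcat // ?pend_pcat // va pvalid_pcat // vb v2.
- have := maximal_src mw; by rewrite /pstart /=.
- have := maximal_sink mw; rewrite !pend_pcat //; by rewrite ?pend_pcat.
Qed.

End Zfacts.

Lemma onth_nth' (T : Type) (s : seq T) i d : i < size s -> onth s i = Some (nth d s i).
Proof. by elim: s i => [|x s IH] [|i] //= h; apply: IH. Qed.

Lemma count_split (T : Type) (a b : pred T) s :
  count a s = count (fun x => a x && b x) s + count (fun x => a x && ~~ b x) s.
Proof. by elim: s => //= x s ->; case: (a x); case: (b x) => /=; lia. Qed.

Lemma sum_const_nat (T : Type) (s : seq T) c : (\sum_(x <- s) c)%N = (c * size s)%N.
Proof. by elim: s => [|x s IH]; rewrite ?big_nil ?big_cons ?IH /= ?muln0 ?mulnS. Qed.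

Lemma count_sum (T : Type) (a : pred T) s : count a s = (\sum_(x <- s) a x)%N.
Proof. by elim: s => [|x s IH]; rewrite ?big_nil ?big_cons //= IH. Qed.

Lemma count2 (T : eqType) (s : seq T) (P : pred T) w1 w2 : uniq s ->
  (forall a b c, a \in s -> b \in s -> c \in s -> P a -> P b -> P c -> [\/ a = b, a = c | b = c]) ->
  w1 \in s -> w2 \in s -> w1 != w2 -> P w1 -> P w2 -> count P s = 2.
Proof.
move=> us h3 h1 h2 ne p1 p2; rewrite -size_filter; apply/eqP; rewrite eqn_leq; apply/andP; split.
  have -> : 2 = size [:: w1; w2] by [].
  apply: uniq_leq_size; first by rewrite filter_uniq.
  move=> y; rewrite mem_filter => /andP [py ys]; rewrite !inE.
  case: (h3 y w1 w2 ys h1 h2 py p1 p2) => [->|->|e]; rewrite ?eqxx ?orbT //.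
  by move: ne; rewrite e eqxx.
have -> : 2 = size [:: w1; w2] by [].
apply: uniq_leq_size; first by rewrite /= andbT inE.
by move=> y; rewrite !inE mem_filter => /orP [] /eqP ->; rewrite ?p1 ?p2 ?h1 ?h2.
Qed.

Section Chain.
Variable k : fieldType.
Variable n : nat.
Variable o : 'I_n -> bool.
Variables I J : elt n k -> Prop.
Hypothesis n2 : 1 < n.
Hypothesis ac : acyclic o.
Hypotheses (iI : is_ideal o I) (iJ : is_ideal o J).
Hypotheses (lI : linearized_semigroup_ideal o I) (lJ : linearized_semigroup_ideal o J).
Hypothesis covV : forall p, maximal_path o p -> GV o I p \/ GV o J p.
Hypothesis covE : forall x, srcsink o x -> GE o I x \/ GE o J x.
Variables (vsI vsJ : seq (rpath n)) (esI esJ : seq 'I_n) (x0 : 'I_n).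
Hypotheses (uvI : uniq vsI) (ueI : uniq esI) (szI : size vsI = (size esI).+1).
Hypotheses (mVI : forall p, GV o I p <-> p \in vsI) (mEI : forall x, GE o I x <-> x \in esI).
Hypothesis adjI : forall i x, onth esI i = Some x -> exists u v,
  onth vsI i = Some u /\ onth vsI i.+1 = Some v /\ endpoint o x u /\ endpoint o x v.
Hypotheses (uvJ : uniq vsJ) (ueJ : uniq esJ) (szJ : size vsJ = (size esJ).+1).
Hypotheses (mVJ : forall p, GV o J p <-> p \in vsJ) (mEJ : forall x, GE o J x <-> x \in esJ).
Hypothesis adjJ : forall i x, onth esJ i = Some x -> exists u v,
  onth vsJ i = Some u /\ onth vsJ i.+1 = Some v /\ endpoint o x u /\ endpoint o x v.

Local Notation dl := (delta k).
Local Notation w0 := (triv x0).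
Local Notation u l := (nth w0 vsI l).
Local Notation e l := (nth x0 esI l).
Local Notation v l := (nth w0 vsJ l).
Local Notation f l := (nth x0 esJ l).

Lemma inVI p : GV o I p -> p \in vsI. Proof. exact: (proj1 (mVI p)). Qed.
Lemma GVI p : p \in vsI -> GV o I p. Proof. exact: (proj2 (mVI p)). Qed.
Lemma inVJ p : GV o J p -> p \in vsJ. Proof. exact: (proj1 (mVJ p)). Qed.
Lemma GVJ p : p \in vsJ -> GV o J p. Proof. exact: (proj2 (mVJ p)). Qed.
Lemma inEI x : GE o I x -> x \in esI. Proof. exact: (proj1 (mEI x)). Qed.
Lemma GEI x : x \in esI -> GE o I x. Proof. exact: (proj2 (mEI x)). Qed.
Lemma inEJ x : GE o J x -> x \in esJ. Proof. exact: (proj1 (mEJ x)). Qed.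
Lemma GEJ x : x \in esJ -> GE o J x. Proof. exact: (proj2 (mEJ x)). Qed.

Lemma adj_gen (vs : seq (rpath n)) (es : seq 'I_n) :
  uniq vs -> size vs = (size es).+1 ->
  (forall i x, onth es i = Some x -> exists u v,
    onth vs i = Some u /\ onth vs i.+1 = Some v /\ endpoint o x u /\ endpoint o x v) ->
  forall l, l < size es ->
  [/\ endpoint o (nth x0 es l) (nth w0 vs l), endpoint o (nth x0 es l) (nth w0 vs l.+1)
    & nth w0 vs l <> nth w0 vs l.+1].
Proof.
move=> uv sz adj l hl.
have [a [b [ha [hb [ea eb]]]]] := adj l _ (onth_nth' x0 hl).
have h1 : l < size vs by rewrite sz ltnS ltnW.
have h2 : l.+1 < size vs by rewrite sz ltnS.
rewrite (onth_nth' w0 h1) in ha.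
rewrite (onth_nth' w0 h2) in hb.
case: ha => ha; case: hb => hb; rewrite ha hb; split => // h.
by have := nth_uniq w0 h1 h2 uv; rewrite ha hb h eqxx; lia.
Qed.

Lemma adjI' l : l < size esI -> [/\ endpoint o (e l) (u l), endpoint o (e l) (u l.+1) & u l <> u l.+1].
Proof. exact: adj_gen. Qed.
Lemma adjJ' l : l < size esJ -> [/\ endpoint o (f l) (v l), endpoint o (f l) (v l.+1) & v l <> v l.+1].
Proof. exact: adj_gen. Qed.

Lemma maxI p : p \in vsI -> maximal_path o p.
Proof. by move/GVI => []. Qed.
Lemma maxJ p : p \in vsJ -> maximal_path o p.
Proof. by move/GVJ => []. Qed.

Lemma edge_endsI l w : l < size esI -> maximal_path o w -> endpoint o (e l) w -> w = u l \/ w = u l.+1.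
Proof.
move=> hl mw ew; have [e1 e2 ne] := adjI' hl.
have m1 : maximal_path o (u l) by apply: maxI; rewrite mem_nth // szI ltnS ltnW.
have m2 : maximal_path o (u l.+1) by apply: maxI; rewrite mem_nth // szI ltnS.
by case: (two_max n2 mw m1 m2 ew e1 e2) => [->|->|]; [left|right|].
Qed.

Lemma edge_endsJ l w : l < size esJ -> maximal_path o w -> endpoint o (f l) w -> w = v l \/ w = v l.+1.
Proof.
move=> hl mw ew; have [e1 e2 ne] := adjJ' hl.
have m1 : maximal_path o (v l) by apply: maxJ; rewrite mem_nth // szJ ltnS ltnW.
have m2 : maximal_path o (v l.+1) by apply: maxJ; rewrite mem_nth // szJ ltnS.
by case: (two_max n2 mw m1 m2 ew e1 e2) => [->|->|]; [left|right|].
Qed.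

Lemma size_undup_cat (T : eqType) (s t : seq T) : uniq s -> uniq t ->
  size (undup (s ++ t)) + count (mem t) s = size s + size t.
Proof.
move=> us ut; rewrite undup_cat !undup_id // size_cat size_filter.
have := count_predC (mem t) s; rewrite /predC /=.
have -> : count (fun x => x \notin t) s = count (predC (mem t)) s by apply: eq_count.
lia.
Qed.

Definition epb (x : 'I_n) (w : rpath n) := (pstart w == x) || (pend o w == x).

Lemma double_count :
  size (undup (vsI ++ vsJ)) = size (undup (esI ++ esJ)).
Proof.
set Vl := undup (vsI ++ vsJ); set El := undup (esI ++ esJ).
have inVl : forall w, maximal_path o w -> w \in Vl.
  move=> w mw; rewrite mem_undup mem_cat; case: (covV mw) => [/inVI -> // | /inVJ ->]; by rewrite orbT.
have inEl : forall x, srcsink o x -> x \in El.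
  move=> x sx; rewrite mem_undup mem_cat; case: (covE sx) => [/inEI -> // | /inEJ ->]; by rewrite orbT.
have mVl : forall w, w \in Vl -> maximal_path o w.
  by move=> w; rewrite mem_undup mem_cat => /orP [/maxI|/maxJ].
have sEl : forall x, x \in El -> srcsink o x.
  move=> x; rewrite mem_undup mem_cat => /orP [/GEI|/GEJ]; by case.
have L : (\sum_(w <- Vl) count (fun x => epb x w) El)%N = (2 * size Vl)%N.
  rewrite -sum_const_nat big_seq [RHS]big_seq; apply: eq_bigr => w hw.
  have mw := mVl _ hw.
  have ne : pstart w != pend o w.
    apply/eqP => h; apply: (@not_src_sink _ o (pstart w)); first exact: maximal_src.
    rewrite h; exact: maximal_sink.
  apply: (count2 (w1 := pstart w) (w2 := pend o w)) => //.
  - by rewrite undup_uniq.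
  - move=> a b c _ _ _; rewrite /epb => /orP [] /eqP <- /orP [] /eqP <- /orP [] /eqP <-;
    by [constructor 1|constructor 2|constructor 3].
  - by apply: inEl; left; exact: maximal_src.
  - by apply: inEl; right; exact: maximal_sink.
  - by rewrite /epb eqxx.
  - by rewrite /epb eqxx orbT.
have R : (\sum_(x <- El) count (fun w => epb x w) Vl)%N = (2 * size El)%N.
  rewrite -sum_const_nat big_seq [RHS]big_seq; apply: eq_bigr => x hx.
  have sx := sEl _ hx.
  have [w1 [w2 [m1 m2 ne e1 e2]]] := two_exist n2 ac sx.
  have epE : forall w, epb x w <-> endpoint o x w.
    move=> w; rewrite /epb /endpoint; split.
      by case/orP => /eqP ->; [left|right].
    by case => ->; rewrite eqxx ?orbT.
  apply: (count2 (w1 := w1) (w2 := w2)) => //.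
  - by rewrite undup_uniq.
  - move=> a b c ha hb hc /epE pa /epE pb /epE pc.
    exact: (two_max n2 (mVl _ ha) (mVl _ hb) (mVl _ hc) pa pb pc).
  - exact: inVl.
  - exact: inVl.
  - by apply/eqP.
  - exact/epE.
  - exact/epE.
have X : (\sum_(w <- Vl) count (fun x => epb x w) El)%N = (\sum_(x <- El) count (fun w => epb x w) Vl)%N.
  under eq_bigr do rewrite count_sum.
  rewrite exchange_big /=; apply: eq_bigr => x _; by rewrite count_sum.
by move: X; rewrite L R => /eqP; rewrite eqn_pmul2l // => /eqP.
Qed.

Lemma count_VE : count (mem vsJ) vsI = (count (mem esJ) esI).+2.
Proof.
have h1 := size_undup_cat uvI uvJ.
have h2 := size_undup_cat ueI ueJ.
have h3 := double_count; have h4 := szI; have h5 := szJ.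
move: (count (mem vsJ) vsI) (count (mem esJ) esI) h1 h2 => a b h1 h2. rewrite h3 h4 h5 in h1.
move: h1 h2; move: (size (undup (esI ++ esJ))) (size esI) (size esJ) => U x y; clear; lia.
Qed.

Definition inW m := (m < size vsI) && (u m \in vsJ).
Definition inF l := (l < size esI) && (e l \in esJ).
Definition st m := inW m && ((m == 0) || ~~ inF m.-1).

Lemma count_inW : count inW (iota 0 (size vsI)) = count (mem vsJ) vsI.
Proof.
rewrite -{2}(mkseq_nth w0 vsI) /mkseq count_map; apply: eq_in_count => m.
by rewrite mem_iota /inW /= => ->.
Qed.

Lemma count_inF : count inF (iota 0 (size esI)) = count (mem esJ) esI.
Proof.
rewrite -{2}(mkseq_nth x0 esI) /mkseq count_map; apply: eq_in_count => m.
by rewrite mem_iota /inF /= => ->.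
Qed.

Lemma inF_inW l : inF l -> inW l /\ inW l.+1.
Proof.
case/andP => hl hJ.
set x := e l.
have hl' : index x esJ < size esJ by rewrite index_mem.
have fx : f (index x esJ) = x by rewrite nth_index.
have [g1 g2 gne] := adjJ' hl'; rewrite fx in g1 g2.
have [e1 e2 _] := adjI' hl.
have hv1 : v (index x esJ) \in vsJ by rewrite mem_nth // szJ ltnS ltnW.
have hv2 : v (index x esJ).+1 \in vsJ by rewrite mem_nth // szJ ltnS.
have inJ : forall w, maximal_path o w -> endpoint o x w -> w \in vsJ.
  move=> w mw ew.
  by case: (two_max n2 mw (maxJ hv1) (maxJ hv2) ew g1 g2) => [->|->|].
have m1 : maximal_path o (u l) by apply: maxI; rewrite mem_nth // szI ltnS ltnW.
have m2 : maximal_path o (u l.+1) by apply: maxI; rewrite mem_nth // szI ltnS.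
rewrite /inW szI !ltnS hl (ltnW hl) /=.
by split; apply: inJ.
Qed.

Lemma count_st : count st (iota 0 (size vsI)) = 2.
Proof.
have A := count_inW; rewrite count_VE -count_inF in A.
rewrite (count_split _ (fun m => (m == 0) || ~~ inF m.-1)) in A.
have B : count (fun m => inW m && ~~ ((m == 0) || ~~ inF m.-1)) (iota 0 (size vsI)) =
          count inF (iota 0 (size esI)).
  rewrite (@eq_count _ _ (fun m => (m != 0) && inF m.-1)); last first.
    move=> m; rewrite negb_or negbK.
    case: (boolP (inF m.-1)) => h; rewrite ?andbF //= andbT.
    case: m h => [|m] h /=; first by rewrite andbF.
    by case: (inF_inW h) => _ ->.
  rewrite szI /= add0n.
  have -> : iota 1 (size esI) = map (addn 1) (iota 0 (size esI)) by rewrite -iotaDl.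
  by rewrite count_map; apply: eq_count => m /=.
have C : count st (iota 0 (size vsI)) + count inF (iota 0 (size esI)) = (count inF (iota 0 (size esI))).+2.
  by rewrite -[in LHS]B; exact: A.
move: C; move: (count st _) (count inF _) => a b; clear; lia.
Qed.


Lemma starts : exists i1 i2, [/\ i1 < i2, st i1, st i2 & forall m, st m -> m = i1 \/ m = i2].
Proof.
have sL : size (filter st (iota 0 (size vsI))) = 2 by rewrite size_filter count_st.
have sortL : sorted ltn (filter st (iota 0 (size vsI))).
  by apply: sorted_filter; [exact: ltn_trans | exact: iota_ltn_sorted].
have memL : forall m, (m \in filter st (iota 0 (size vsI))) = st m.
  move=> m; rewrite mem_filter mem_iota; case: (boolP (st m)) => //= /andP [/andP [hm _] _].
  by rewrite hm.
move: sL sortL memL; case: (filter st _) => [|i1 [|i2 [|? ?]]] //= _ /andP [lt _] memL.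
exists i1, i2; split => //.
- by rewrite -memL inE eqxx.
- by rewrite -memL !inE eqxx orbT.
- by move=> m; rewrite -memL !inE => /orP [] /eqP; tauto.
Qed.

Lemma subpath_trans (p q w : rpath n) : subpath o p q -> subpath o q w -> subpath o p w.
Proof.
move=> [a [b [[va [vp ea]] [[_ [vb eb]] ->]]]] [a' [b' [[va' [vq ea']] [[_ [vb' eb']] ->]]]].
have ea2 : pend o a = pstart a'.
  by rewrite -ea' pend_pcat // pend_pcat.
exists (pcat a' a), (pcat b b'); split.
  by split; [rewrite pvalid_pcat // va va' | split => //; rewrite pend_pcat].
split.
  split => //; split; last by rewrite pend_pcat.
  by rewrite pvalid_pcat // vb vb'.
by rewrite /pcat /= !catA.
Qed.

Lemma idx_u m : m < size vsI -> index (u m) vsI = m.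
Proof. by move=> h; rewrite index_uniq. Qed.

Lemma span_split (Y Y1 Y2 : rpath n -> Prop) (g : elt n k) : (forall p, Y p -> Y1 p \/ Y2 p) ->
  in_span Y g -> exists a b, in_span Y1 a /\ in_span Y2 b /\ g = (fun p => a p + b p)%R.
Proof.
move=> cov [s [hs ->]]; elim: s hs => [|cp s IH] hs.
  exists (@zero_elt n k), (@zero_elt n k); split; first exact: span_zero.
  split; first exact: span_zero.
  by apply: functional_extensionality => q; rewrite big_nil /zero_elt addr0.
have hs' : forall cp', cp' \in s -> Y cp'.2 by move=> cp' h; apply: hs; rewrite inE h orbT.
have [a [b [ha [hb eab]]]] := IH hs'.
have y : Y cp.2 by apply: hs; rewrite inE eqxx.
case: (cov _ y) => h.
  exists (fun q => cp.1 * dl cp.2 q + a q)%R, b; split.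
    by apply: span_add => //; apply: span_scale; apply: span_delta.
  split => //; apply: functional_extensionality => q.
  by rewrite big_cons (congr1 (fun f => f q) eab) /= addrA.
exists a, (fun q => cp.1 * dl cp.2 q + b q)%R; split => //.
split; first by apply: span_add => //; apply: span_scale; apply: span_delta.
apply: functional_extensionality => q.
by rewrite big_cons (congr1 (fun f => f q) eab) /= addrCA.
Qed.

Lemma rdir : (forall w, GV o I w -> GV o J w ->
    (forall x, GE o I x -> GE o J x -> ~ endpoint o x w) -> ZZp o I J w) ->
  decomposes o (iprod o I J).
Proof.
move=> H.
have allZ : forall w, GV o I w -> GV o J w -> ZZp o I J w.
  move=> w hI hJ; case: (classic (exists x, GE o I x /\ GE o J x /\ endpoint o x w)) => [[x [h1 [h2 h3]]]|nx].
    exact: (Z_of_edge hI hJ h1 h2 h3).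
  by apply: H => // x h1 h2 h3; apply: nx; exists x.
have [i1 [i2 [lt12 s1 s2 sall]]] := starts.
pose idx w := index w vsI.
pose Z1 p := ZZp o I J p /\ forall w, maximal_path o w -> subpath o p w -> idx w < i2.
pose Z2 p := ZZp o I J p /\ forall w, maximal_path o w -> subpath o p w -> i2 <= idx w.
have Zv : forall p, ZZp o I J p -> pvalid o p by move=> p; apply: Z_valid.
have v1 : forall p, Z1 p -> pvalid o p by move=> p [z _]; exact: Zv.
have v2 : forall p, Z2 p -> pvalid o p by move=> p [z _]; exact: Zv.
have c1 : ext_closed o Z1.
  move=> w a b [z h] ca cb; split; first exact: Z_ext.
  move=> w' mw' sw'; apply: h mw' _; apply: subpath_trans sw'; by exists a, b.
have c2 : ext_closed o Z2.
  move=> w a b [z h] ca cb; split; first exact: Z_ext.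
  move=> w' mw' sw'; apply: h mw' _; apply: subpath_trans sw'; by exists a, b.
have vert : forall m, st m -> [/\ ZZp o I J (u m), maximal_path o (u m) & idx (u m) = m].
  move=> m /andP [/andP [hm hJ] _].
  have hI : u m \in vsI by rewrite mem_nth.
  split; [apply: allZ; [exact: GVI | exact: GVJ] | exact: maxI | exact: idx_u].
have vertsub : forall m w, st m -> maximal_path o w -> subpath o (u m) w -> w = u m.
  move=> m w hm mw sw; have [_ [_ mm] _] := vert m hm.
  exact: mm w (maximal_valid mw) sw.
have cover : forall p, ZZp o I J p -> Z1 p \/ Z2 p.
  move=> p z.
  case: (classic (forall w, maximal_path o w -> subpath o p w -> idx w < i2)) => h; first by left.
  right; split => // w' mw' sw'; rewrite leqNgt; apply/negP => lt'.
  have [w [mw sw nw]] : exists w, [/\ maximal_path o w, subpath o p w & ~ idx w < i2].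
    apply: NNPP => H'; apply: h => w mw sw; apply: NNPP => nl; apply: H'; by exists w.
  have ne : w <> w' by move=> hE; subst w'; exact: nw lt'.
  have [y [ey [epw epw']]] := lemmaU n2 mw mw' sw sw' ne.
  subst p.
  have sy := endpoint_srcsink mw epw.
  have hyI : y \in esI by apply: inEI; split => //; exact: Z_I z.
  have hyJ : y \in esJ by apply: inEJ; split => //; exact: Z_J z.
  set l := index y esI.
  have hl : l < size esI by rewrite index_mem.
  have el : e l = y by rewrite nth_index.
  have inFl : inF l by rewrite /inF hl el hyJ.
  have zw := Z_sub iI iJ z sw; have zw' := Z_sub iI iJ z sw'.
  have wI : w \in vsI by apply: inVI; case: (Z_GV iI iJ zw mw).
  have wI' : w' \in vsI by apply: inVI; case: (Z_GV iI iJ zw' mw').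
  have hl1 : l < size vsI by rewrite szI ltnS ltnW.
  have hl2 : l.+1 < size vsI by rewrite szI ltnS.
  have epw2 : endpoint o (e l) w by rewrite el.
  have epw2' : endpoint o (e l) w' by rewrite el.
  have iw : idx w = l \/ idx w = l.+1.
    by case: (edge_endsI hl mw epw2) => ->; [left|right]; apply: idx_u.
  have iw' : idx w' = l \/ idx w' = l.+1.
    by case: (edge_endsI hl mw' epw2') => ->; [left|right]; apply: idx_u.
  have nid : idx w <> idx w'.
    by move=> hE; apply: ne; rewrite -(nth_index w0 wI) -(nth_index w0 wI') -/(idx w) -/(idx w') hE.
  have e2 : i2 = l.+1 by move: nw lt' iw iw' nid; clear; lia.
  by move: s2; rewrite /st e2 /= inFl andbF.
exists (@in_span n k Z1), (@in_span n k Z2).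
have iA := span_ideal k n2 ac v1 c1.
have iB := span_ideal k n2 ac v2 c2.
split; first exact: iA.
split; first exact: iB.
split.
  exists (dl (u i1)); split; last exact: delta_nz.
  have [z m1 id1] := vert i1 s1.
  apply: span_delta; split => // w mw sw; by rewrite (vertsub i1 w s1 mw sw) id1.
split.
  exists (dl (u i2)); split; last exact: delta_nz.
  have [z m1 id1] := vert i2 s2.
  apply: span_delta; split => // w mw sw; by rewrite (vertsub i2 w s2 mw sw) id1.
split.
  move=> g hA hB; apply: NNPP => nz.
  have [q hq] := nz_point nz.
  have [z h1] := span_supp hA hq.
  have [_ h2] := span_supp hB hq.
  have [a [b [ca [cb mw]]]] := ext_max n2 ac (Zv _ z).
  have sub : subpath o q (pcat a (pcat q b)) by exists a, b.
  by have := h1 _ mw sub; have := h2 _ mw sub; clear; lia.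
move=> g; split.
  move=> /(iprod_span iI iJ lI lJ) hs.
  have [a [b [ha [hb ->]]]] := span_split cover hs.
  by exists a, b.
move=> [a [b [ha [hb ->]]]]; apply: (span_iprod iI); apply: span_add.
  by apply: span_mono ha => p [].
by apply: span_mono hb => p [].
Qed.

Lemma vfe (D : elt n k -> Prop) x w : is_ideal o D -> D (dl (triv x)) -> maximal_path o w ->
  endpoint o x w -> D (dl w).
Proof.
move=> iD hx mw [ew|ew].
  have e1 : pend o (triv x) = pstart w by rewrite ew.
  have -> : dl w = kmul o (dl w) (dl (triv x)) by rewrite (kmul_dd_comp k e1) -ew pcat_triv_r.
  apply: ideal_mull iD _ hx; apply: delta_in_kQ; exact: maximal_valid.
have e2 : pend o w = pstart (triv x) by rewrite ew.
have -> : dl w = kmul o (dl (triv x)) (dl w) by rewrite (kmul_dd_comp k e2) -ew pcat_triv_l.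
by apply: ideal_mulr iD hx _; apply: delta_in_kQ; exact: maximal_valid.
Qed.

Lemma ldir : decomposes o (iprod o I J) ->
  forall w, GV o I w -> GV o J w ->
    (forall x, GE o I x -> GE o J x -> ~ endpoint o x w) -> ZZp o I J w.
Proof.
move=> D w hI hJ iso; apply: NNPP => nz.
case: D => [A [B [iA [iB [nA [nB [disj iff]]]]]]].
have zA : A (@zero_elt n k) by case: iA => _ [].
have zB : B (@zero_elt n k) by case: iB => _ [].
have subA : forall g, A g -> in_span (ZZp o I J) g.
  move=> g hg; apply: (iprod_span iI iJ lI lJ); apply/iff.
  exists g, (@zero_elt n k); split => //; split => //.
  by apply: functional_extensionality => q; rewrite /zero_elt addr0.
have subB : forall g, B g -> in_span (ZZp o I J) g.
  move=> g hg; apply: (iprod_span iI iJ lI lJ); apply/iff.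
  exists (@zero_elt n k), g; split => //; split => //.
  by apply: functional_extensionality => q; rewrite /zero_elt add0r.
have wI := inVI hI; have wJ := inVJ hJ.
set j := index w vsI.
have hj : j < size vsI by rewrite index_mem.
have uj : u j = w by rewrite nth_index.
have inWj : inW j by rewrite /inW hj uj wJ.
have edgeI : forall l, inF l -> GE o I (e l) /\ GE o J (e l).
  move=> l /andP [hl hlJ]; split; [apply: GEI; exact: mem_nth | exact: GEJ].
have nFj : ~~ inF j.
  apply/negP => hF; have [g1 g2] := edgeI _ hF.
  have hl : j < size esI by case/andP: hF.
  have [e1 _ _] := adjI' hl; apply: (iso _ g1 g2); by rewrite -uj.
have stj : st j.
  rewrite /st inWj /=; case: (posnP j) => [->//|jp]; apply/orP; right; apply/negP => hF.
  have [g1 g2] := edgeI _ hF.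
  have hl : j.-1 < size esI by case/andP: hF.
  have [_ e2 _] := adjI' hl; apply: (iso _ g1 g2); by rewrite -uj -(ltn_predK jp).
have [i1 [i2 [lt12 s1 s2 sall]]] := starts.
have [i [sti nij allst]] : exists i, [/\ st i, i <> j & forall m, st m -> m = i \/ m = j].
  case: (sall j stj) => ej.
    exists i2; split => //; first by move=> e'; move: lt12; rewrite -ej e' ltnn.
    by move=> m /sall [->|->]; [right|left].
  exists i1; split => //; first by move=> e'; move: lt12; rewrite e' -ej ltnn.
  by move=> m /sall [->|->]; [left|right].
have R : forall m, inW m -> m <> j -> i <= m /\ (forall l, i <= l -> l < m -> inF l).
  elim/ltn_ind => m IH hW hne.
  case: (boolP (st m)) => hs.
    case: (allst m hs) => // ->; split => // l h1 h2; exfalso; move: h1 h2; clear; lia.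
  have [m0 hF] : m != 0 /\ inF m.-1.
    move: hs; rewrite /st hW /= negb_or negbK => /andP [] //.
  have [hW1 _] := inF_inW hF.
  have hne1 : m.-1 <> j by move=> e'; move: nFj; rewrite -e' hF.
  have lm : m.-1 < m by rewrite prednK ?lt0n.
  have [h1 h2] := IH m.-1 lm hW1 hne1.
  split; first by move: h1 lm; clear; lia.
  move=> l hl1 hl2; case: (ltnP l m.-1) => hl3; first exact: h2.
  have -> : l = m.-1 by move: hl2 hl3 m0; clear; lia.
  exact: hF.
have Zmax : forall r, ZZp o I J r -> maximal_path o r -> exists m, [/\ r = u m, inW m & m <> j].
  move=> r z mr; have [gI gJ] := Z_GV iI iJ z mr.
  have rI := inVI gI; have rJ := inVJ gJ.
  exists (index r vsI); split.
  - by rewrite nth_index.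
  - by rewrite /inW index_mem rI nth_index.
  - move=> hE; apply: nz; have <- : r = w by rewrite -(nth_index w0 rI) -uj hE.
    exact: z.
have trivcolor : forall x, ZZp o I J (triv x) -> A (dl (triv x)) \/ B (dl (triv x)).
  move=> x zt.
  have vt : pvalid o (triv x) by [].
  have kt : in_kQ o (dl (triv x)) := delta_in_kQ k vt.
  have [a [b [ha [hb eab]]]] : exists a b, A a /\ B b /\ dl (triv x) = (fun p => a p + b p)%R.
    by apply/iff; apply: (span_iprod iI); apply: span_delta.
  have supp : forall c, in_span (ZZp o I J) c -> forall q,
      kmul o (dl (triv x)) (kmul o c (dl (triv x))) q != 0%R -> q = triv x.
    move=> c [s [hs ec]] q; have -> : c = lin s := ec.
    rewrite -(lin_delta k (triv x)) !kmul_lin => /lin_nz [cp [hcp <-]].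
    move: hcp => /mem_lin_prod [a' [b' [ha' hb' e1 ->]]] /=.
    move: ha'; rewrite inE => /eqP ha'; subst a' => /=.
    move: hb' e1 => /mem_lin_prod [cp2 [b2 [h2 hb2 e2 ->]]] /= e1.
    move: hb2; rewrite inE => /eqP hb2; subst b2 => /=.
    move: e2 e1 => /= e2 e1.
    have vp := Z_valid iI (hs _ h2).
    have ep1 : pstart cp2.2 = x by rewrite -e2.
    have ep2 : pend o cp2.2 = x by rewrite -(pend_pcat e2) e1.
    have tr2 : cp2.2.2 = [::].
      by apply: NNPP => hne; apply: (ac vp hne); rewrite ep1 ep2.
    by move: ep1 tr2; case: (cp2.2) => y s' /= -> ->.
  set h := kmul o (dl (triv x)) (kmul o a (dl (triv x))).
  set h' := kmul o (dl (triv x)) (kmul o b (dl (triv x))).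
  have hA : A h by apply: (ideal_mull iA kt); apply: (ideal_mulr iA ha kt).
  have hB : B h' by apply: (ideal_mull iB kt); apply: (ideal_mulr iB hb kt).
  have sum1 : (h (triv x) + h' (triv x) = 1)%R.
    rewrite /h /h' -kmul_addr.
    have -> : (fun q => kmul o a (dl (triv x)) q + kmul o b (dl (triv x)) q)%R =
              kmul o (dl (triv x)) (dl (triv x)).
      by apply: functional_extensionality => q; rewrite -kmul_addl -eab.
    by rewrite (kmul_dd_comp k (a := triv x) (b := triv x)) // (kmul_dd_comp k) // /delta /= eqxx.
  case: (eqVneq (h (triv x)) 0%R) => h0.
    right; apply: (single_point iB hB) => [hz|q /(supp _ (subB _ hb)) //].
    by move: sum1; rewrite h0 hz /zero_elt addr0 => /eqP; rewrite eq_sym oner_eq0.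
  left; apply: (single_point iA hA) => [hz|q /(supp _ (subA _ ha)) //].
  by move: h0; rewrite hz /zero_elt eqxx.
have final : forall C C' : elt n k -> Prop, is_ideal o C -> is_ideal o C' -> nonzero_ideal C' ->
    (forall g, C' g -> in_span (ZZp o I J) g) -> (forall g, C g -> C' g -> g = @zero_elt n k) ->
    (forall r, ZZp o I J r -> maximal_path o r -> C (dl r)) -> False.
  move=> C C' iC iC' [f [hf fnz]] subC' dj PC.
  have [g [hg [gnz [s [hs eg]]]]] := extract n2 ac iI iJ iC' subC' hf fnz.
  have gC : C g.
    have -> : g = lin s := eg.
    by apply: ideal_lin iC _ => cp hcp; have [z m] := hs _ hcp; exact: PC.
  exact: gnz (dj g gC hg).
have key : (forall r, ZZp o I J r -> maximal_path o r -> A (dl r)) \/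
           (forall r, ZZp o I J r -> maximal_path o r -> B (dl r)).
  have Ztr : forall l, inF l -> ZZp o I J (triv (e l)).
    by move=> l hl; have [g1 g2] := edgeI l hl; exact: Z_triv g1 g2.
  have mu : forall m, m < size vsI -> maximal_path o (u m) by move=> m hm; apply: maxI; rewrite mem_nth.
  case: (classic (exists l, inF l)) => [[l0 hF0]|noF]; last first.
    have [f [hf fnz]] := nA.
    have [g [hg [gnz gs]]] := extract n2 ac iI iJ iA subA hf fnz.
    have onlyi : forall r, ZZp o I J r -> maximal_path o r -> r = u i.
      move=> r z mr; have [m [-> hWm hmj]] := Zmax r z mr.
      have [im hRm] := R m hWm hmj.
      case: (ltngtP i m) => [lt|gt|-> //].
        by exfalso; apply: noF; exists i; apply: hRm.
      by move: im gt; clear; lia.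
    have Aui : A (dl (u i)).
      apply: (single_point iA hg gnz) => q hq.
      have [z mq] := span_supp gs hq; exact: onlyi.
    by left => r z mr; rewrite (onlyi r z mr).
  have [hW0 hW1] := inF_inW hF0.
  have l0j : l0 <> j by move=> e'; move: nFj; rewrite -e' hF0.
  have l1j : l0.+1 <> j by move=> e'; move: stj; rewrite /st -e' /= hF0 andbF.
  have [il0 _] := R l0 hW0 l0j.
  have [_ hR1] := R l0.+1 hW1 l1j.
  have lt0 : i < l0.+1 by rewrite ltnS.
  have hFi : inF i := hR1 i (leqnn i) lt0.
  have prop : forall C C' : elt n k -> Prop, is_ideal o C -> is_ideal o C' ->
      (forall g, C g -> C' g -> g = @zero_elt n k) ->
      (forall x, ZZp o I J (triv x) -> C (dl (triv x)) \/ C' (dl (triv x))) ->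
      C (dl (triv (e i))) -> forall r, ZZp o I J r -> maximal_path o r -> C (dl r).
    move=> C C' iC iC' dj col Ci.
    have Pl : forall d, (forall l', i <= l' -> l' <= i + d -> inF l') -> C (dl (triv (e (i + d)))).
      elim=> [|d IH] hF; first by rewrite addn0.
      have hFd : inF (i + d).+1 by apply: hF; move: (leqnn i); clear; lia.
      have hFd0 : inF (i + d) by apply: hF; move: (leqnn i); clear; lia.
      have Cd : C (dl (triv (e (i + d)))).
        by apply: IH => l' h1 h2; apply: hF => //; move: h2; clear; lia.
      rewrite addnS; case: (col _ (Ztr _ hFd)) => // C'd; exfalso.
      have hl : i + d < size esI by case/andP: hFd0.
      have hm : (i + d).+1 < size esI by case/andP: hFd.
      have [_ ea _] := adjI' hl.
      have [eb _ _] := adjI' hm.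
      have mm : maximal_path o (u (i + d).+1) by apply: mu; rewrite szI ltnS ltnW.
      have := dj _ (vfe iC Cd mm ea) (vfe iC' C'd mm eb).
      exact: delta_nz.
    move=> r z mr; have [m [-> hWm hmj]] := Zmax r z mr.
    have [im hRm] := R m hWm hmj.
    have hm : m < size vsI by case/andP: hWm.
    case: (ltngtP i m) => [lt|gt|eq].
    - have hFl : inF m.-1 by apply: hRm; move: lt; clear; lia.
      have hl : m.-1 < size esI by case/andP: hFl.
      have Cl : C (dl (triv (e (i + (m.-1 - i))))).
        by apply: Pl => l' h1 h2; apply: hRm => //; move: h2 lt; clear; lia.
      rewrite subnKC in Cl; last by move: lt; clear; lia.
      have [_ e2 _] := adjI' hl.
      rewrite prednK in e2; last by move: lt; clear; lia.
      exact: vfe iC Cl (mu _ hm) e2.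
    - by move: im gt; clear; lia.
    - have hl : i < size esI by case/andP: hFi.
      have [e1 _ _] := adjI' hl.
      have hm' : i < size vsI by rewrite eq.
      rewrite -eq; exact: vfe iC Ci (mu _ hm') e1.
  case: (trivcolor _ (Ztr _ hFi)) => hc.
    by left; apply: (prop A B iA iB disj trivcolor hc).
  right; apply: (prop B A iB iA _ _ hc).
    by move=> g h1 h2; exact: disj.
  by move=> x zx; case: (trivcolor x zx); [right|left].
case: key => [PA|PB].
  exact: (final A B iA iB nB subB disj PA).
by apply: (final B A iB iA nA subA _ PB) => g h1 h2; exact: disj.
Qed.
End Chain.

Lemma adm_n2 n (o : 'I_n -> bool) : admissible o -> 1 < n.
Proof.
move=> [ac [x _]]; rewrite ltnNge; apply/negP => hn.
have eq1 : forall y z : 'I_n, y = z.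
  move=> y z; apply: ord_inj; move: (ltn_ord y) (ltn_ord z) hn; clear.
  by move: (nat_of_ord y) (nat_of_ord z) => a b; lia.
apply: (ac (x, [:: x])) => //=.
by rewrite /pvalid /= (eq1 (asrc o x) x) eqxx.
Qed.

Unset Implicit Arguments.

Theorem lemma25 (k : closedFieldType) (n : nat) (o : 'I_n -> bool)
  (I J : elt n k -> Prop) :
  admissible o ->
  type_II o I -> type_II o J ->
  (forall p, maximal_path o p -> GV o I p \/ GV o J p) ->
  (forall x, srcsink o x -> GE o I x \/ GE o J x) ->
  (decomposes o (iprod o I J) <->
   (forall w : rpath n,
      GV o I w -> GV o J w ->
      (forall x, GE o I x -> GE o J x -> ~ endpoint o x w) ->
      exists al be : rpath n,
        composable o al be /\ I (delta k al) /\ J (delta k be) /\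
        w = pcat al be)).
Proof.
move=> ad tI tJ covV covE.
have n2 := adm_n2 ad.
have ac : acyclic o := ad.1.
have [x0 _] := ad.2.
case: tI => [[iI _] [lI [[vsI [esI [uvI [ueI [szI [mVI [mEI adjI]]]]]]] _]]].
case: tJ => [[iJ _] [lJ [[vsJ [esJ [uvJ [ueJ [szJ [mVJ [mEJ adjJ]]]]]]] _]]].
split.
  move=> D.
  exact: (ldir n2 ac iI iJ lI lJ covV covE x0 uvI ueI szI mVI mEI adjI uvJ ueJ szJ mVJ mEJ adjJ D).
move=> H.
exact: (rdir n2 ac iI iJ lI lJ covV covE x0 uvI ueI szI mVI mEI adjI uvJ ueJ szJ mVJ mEJ adjJ H).
Qed.
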